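(* Let the models $S_m$, $m\in I_n$, the penalty $\mathrm{pen}(m)=\theta D_m/(4n)$ with a fixed $\theta>1$, the selected index $\widehat m$ and the truncated estimator $\tilde F_{\widehat m}$ be as in the context, and assume that the collections $\mathcal M_n^{(1)},\mathcal M_n^{(2)}$ satisfy assumption (H). Then there exist constants $C_1,C_2>0$, not depending on $n$, on $F$ or on the design, such that almost surely $$\mathbb{E}\left[\|\tilde F_{\widehat m}-F\|_n^2\,\middle|\,\mathbf X,\mathbf T\right]\le C_1\inf_{m\in I_n}\left\{\inf_{t\in S_m}\|F-t\|_n^2+\mathrm{pen}(m)\right\}+\frac{C_2}{n}.$$ (The constants may depend on $\theta$ and on the constants appearing in (H).) In particular the bound holds for any fixed (deterministic) design $(X_i,T_i)_{i\le n}$.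
   Context: Observation model: $(X_i,Y_i,T_i)_{i=1,\dots,n}$ are i.i.d., $Y_i,T_i>0$, and $Y_i$ is independent of $T_i$ conditionally on $X_i$. One observes only $(X_i,T_i,\delta_i)_{i=1,\dots,n}$ with $\delta_i=\mathbf 1_{\{Y_i\le T_i\}}$. The target is the conditional c.d.f. $F(x,y)=\mathbb P[Y\le y\mid X=x]$, so that $\mathbb E[\delta_i\mid X_i,T_i]=F(X_i,T_i)$. Let $A=A_1\times A_2\subset\mathbb R\times\mathbb R^+$ with $A_1,A_2$ compact intervals; convention: all design points $(X_i,T_i)$ lie in $A$ and functions are considered on $A$. Write $\mathbf X=(X_1,\dots,X_n)$, $\mathbf T=(T_1,\dots,T_n)$. Empirical norm: $\|t\|_n^2=\frac1n\sum_{i=1}^n t^2(X_i,T_i)$. Models: for $j=1,2$, $\mathcal M_n^{(j)}=\{S^{(j)}_{m_j}, m_j\in I_n^{(j)}\}$ is a collection of finite-dimensional linear subspaces of $L^2(A_j)$, $\dim S^{(j)}_{m_j}=D^{(j)}_{m_j}$, with orthonormal bases $(\phi^{m_1}_k)_{k\le D^{(1)}_{m_1}}$ of $S^{(1)}_{m_1}$ and $(\psi^{m_2}_l)_{l\le D^{(2)}_{m_2}}$ of $S^{(2)}_{m_2}$. For $m=(m_1,m_2)\in I_n=I_n^{(1)}\times I_n^{(2)}$, $S_m=S^{(1)}_{m_1}\otimes S^{(2)}_{m_2}=\{t(x,y)=\sum_{k,l}a_{k,l}\phi^{m_1}_k(x)\psi^{m_2}_l(y)\}$, of dimension $D_m=D^{(1)}_{m_1}D^{(2)}_{m_2}$.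 Assumption (H): for $j=1,2$ and every $b>0$ there is a constant $B_j$ (depending on $b$) with $\sum_{m_j\in I_n^{(j)}}\exp(-b\sqrt{D^{(j)}_{m_j}})\le B_j$ for all $n\ge1$. Estimators: contrast $\gamma_n(t)=\frac1n\sum_{i=1}^n(\delta_i-t(X_i,T_i))^2$; $\widehat F_m\in\arg\min_{t\in S_m}\gamma_n(t)$ (any minimizer; its values at the design points are uniquely determined); $\mathrm{pen}(m)=\frac{\theta}{4}\frac{D_m}{n}$ with a fixed $\theta>1$; $\widehat m\in\arg\min_{m\in I_n}[\gamma_n(\widehat F_m)+\mathrm{pen}(m)]$; and $\tilde F_m(x,u)=\min(\max(\widehat F_m(x,u),0),1)$ (truncation to $[0,1]$). *)

(* Defs.v *)
From Stdlib Require Import Reals List Lra.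
Open Scope R_scope.

Fixpoint rsum (n : nat) (f : nat -> R) : R :=
  match n with O => 0 | S k => rsum k f + f k end.

Fixpoint rprod (n : nat) (f : nat -> R) : R :=
  match n with O => 1 | S k => rprod k f * f k end.

(* all boolean vectors of length n (the possible values of (delta_1..delta_n)) *)
Fixpoint all_bools (n : nat) : list (list bool) :=
  match n with
  | O => nil :: nil
  | S k => map (cons true) (all_bools k) ++ map (cons false) (all_bools k)
  end.

Definition delta (d : list bool) (i : nat) : R := if nth i d false then 1 else 0.

Definition emp_norm2 (n : nat) (x t : nat -> R) (g : R -> R -> R) : R :=
  / INR n * rsum n (fun i => (g (x i) (t i)) ^ 2).

Definition gamma_n (n : nat) (x t : nat -> R) (d : list bool) (g : R -> R -> R) : R :=
  / INR n * rsum n (fun i => (delta d i - g (x i) (t i)) ^ 2).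

Definition clip01 (r : R) : R := Rmin (Rmax r 0) 1.

Definition lin_indep_on (P : R -> Prop) (D : nat) (phi : nat -> R -> R) : Prop :=
  forall c : nat -> R,
    (forall u, P u -> rsum D (fun k => c k * phi k u) = 0) ->
    forall k, (k < D)%nat -> c k = 0.

Definition in_tensor_span (A1 A2 : R -> Prop) (D1 D2 : nat)
    (phi psi : nat -> R -> R) (g : R -> R -> R) : Prop :=
  exists a : nat -> nat -> R,
    forall u v, A1 u -> A2 v ->
      g u v = rsum D1 (fun k => rsum D2 (fun l => a k l * phi k u * psi l v)).

(* Assumption (H) for one collection: sum_{m} exp(-b sqrt D_m) <= B b,
   the (possibly infinite) sum of nonnegative terms being the sup of finite partial sums *)
Definition assumption_H (I : Type) (D : I -> nat) (B : R -> R) : Prop :=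
  forall b, 0 < b ->
    forall l : list I, NoDup l ->
      fold_right (fun m acc => exp (- b * sqrt (INR (D m))) + acc) 0 l <= B b.

Definition cond_cdf (F : R -> R -> R) : Prop :=
  forall u,
    (forall y, 0 <= F u y <= 1) /\
    (forall y z, y <= z -> F u y <= F u z) /\
    (forall y, y <= 0 -> F u y = 0) /\
    (forall y eps, 0 < eps -> exists dl, 0 < dl /\
        forall z, y <= z < y + dl -> F u z - F u y < eps) /\
    (forall eps, 0 < eps -> exists M, forall y, M < y -> 1 - eps < F u y).

(* conditional probability of the indicator vector d given the design:
   delta_i independent Bernoulli(p i) *)
Definition bern_prob (n : nat) (p : nat -> R) (d : list bool) : R :=
  rprod n (fun i => if nth i d false then p i else 1 - p i).

Definition cond_exp (n : nat) (p : nat -> R) (L : list bool -> R) : R :=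
  fold_right (fun d acc => bern_prob n p d * L d + acc) 0 (all_bools n).

(* Main.v *)
Require Import Defs.
From Stdlib Require Import Reals List Lra Lia Classical IndefiniteDescription FunctionalExtensionality.
Open Scope R_scope.

Lemma rsum_ext n f g : (forall i, (i < n)%nat -> f i = g i) -> rsum n f = rsum n g.
Proof. induction n; simpl; intros H; auto. rewrite IHn by (intros; apply H; lia). rewrite H by lia; auto. Qed.

Lemma rsum_le n f g : (forall i, (i < n)%nat -> f i <= g i) -> rsum n f <= rsum n g.
Proof. induction n; simpl; intros H; [lra|]. pose proof (H n ltac:(lia)). pose proof (IHn ltac:(intros; apply H; lia)). lra. Qed.

Lemma rsum_nonneg n f : (forall i, (i < n)%nat -> 0 <= f i) -> 0 <= rsum n f.
Proof. intros H. replace 0 with (rsum n (fun _ => 0)). apply rsum_le; auto.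
 induction n; simpl; auto. rewrite IHn; [lra|]. intros; apply H; lia. Qed.

Lemma rsum_zero n : rsum n (fun _ => 0) = 0.
Proof. induction n; simpl; auto. rewrite IHn; lra. Qed.

Lemma rsum_plus n f g : rsum n (fun i => f i + g i) = rsum n f + rsum n g.
Proof. induction n; simpl; [lra|]. rewrite IHn; lra. Qed.

Lemma rsum_minus n f g : rsum n (fun i => f i - g i) = rsum n f - rsum n g.
Proof. induction n; simpl; [lra|]. rewrite IHn; lra. Qed.

Lemma rsum_scal n c f : rsum n (fun i => c * f i) = c * rsum n f.
Proof. induction n; simpl; [lra|]. rewrite IHn; lra. Qed.

Lemma rsum_scal_r n c f : rsum n (fun i => f i * c) = rsum n f * c.
Proof. induction n; simpl; [lra|]. rewrite IHn; lra. Qed.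

Lemma rsum_shift n f : rsum (S n) f = f 0%nat + rsum n (fun i => f (S i)).
Proof. induction n; simpl in *; [lra|]. rewrite IHn. lra. Qed.

Lemma rsum_swap n m f : rsum n (fun i => rsum m (fun j => f i j)) = rsum m (fun j => rsum n (fun i => f i j)).
Proof. induction n; simpl. - rewrite rsum_zero; auto. - rewrite IHn, <- rsum_plus. auto. Qed.

Lemma rsum_delta n k c : (k < n)%nat -> rsum n (fun l => c l * (if Nat.eqb k l then 1 else 0)) = c k.
Proof. induction n; intros Hk; [lia|]. simpl. destruct (Nat.eq_dec k n).
 - subst. rewrite Nat.eqb_refl. rewrite (rsum_ext _ _ (fun _ => 0)). rewrite rsum_zero; lra.
   intros i Hi. destruct (Nat.eqb_spec n i); [lia|]; lra.
 - rewrite IHn by lia. destruct (Nat.eqb_spec k n); [lia|]; lra. Qed.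

Lemma rsum_sq n a : (rsum n a)^2 = rsum n (fun i => rsum n (fun j => a i * a j)).
Proof. replace ((rsum n a)^2) with (rsum n a * rsum n a) by ring.
 rewrite <- rsum_scal_r. apply rsum_ext; intros i _. rewrite <- rsum_scal. auto. Qed.

Lemma rsum_split_diag n h i : (i < n)%nat -> rsum n h = h i + rsum n (fun j => if Nat.eqb i j then 0 else h j).
Proof. intros Hi. rewrite <- (rsum_delta n i h Hi).
 rewrite <- rsum_plus. apply rsum_ext; intros j _. destruct (Nat.eqb i j); lra. Qed.

Lemma rsum_le_term n f i : (i < n)%nat -> (forall j, (j < n)%nat -> 0 <= f j) -> f i <= rsum n f.
Proof. intros Hi H. rewrite (rsum_split_diag n f i Hi).
 assert (0 <= rsum n (fun j => if Nat.eqb i j then 0 else f j)).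
 apply rsum_nonneg. intros j Hj; destruct (Nat.eqb i j); [lra| auto]. lra. Qed.

Lemma rsum_const n c : rsum n (fun _ => c) = INR n * c.
Proof. induction n; simpl rsum; [simpl; lra|]. rewrite IHn, S_INR. lra. Qed.

Definition ip (n : nat) (u v : nat -> R) : R := rsum n (fun i => u i * v i).
Definition comb (d : nat) (c : nat -> R) (e : nat -> nat -> R) : nat -> R :=
  fun i => rsum d (fun k => c k * e k i).
Definition ortho (n d : nat) (e : nat -> nat -> R) : Prop :=
  forall k l, (k < d)%nat -> (l < d)%nat -> ip n (e k) (e l) = if Nat.eqb k l then 1 else 0.
Definition covered (n d : nat) (e : nat -> nat -> R) (v : nat -> R) : Prop :=
  exists c, forall i, (i < n)%nat -> v i = comb d c e i.

Lemma ip_sym n u v : ip n u v = ip n v u.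
Proof. unfold ip; apply rsum_ext; intros; ring. Qed.

Lemma ip_comb_l n d c e u : ip n (comb d c e) u = rsum d (fun k => c k * ip n (e k) u).
Proof. unfold ip, comb. rewrite (rsum_ext n _ (fun i => rsum d (fun k => c k * e k i * u i))).
 rewrite rsum_swap. apply rsum_ext; intros k _. rewrite <- rsum_scal. apply rsum_ext; intros; ring.
 intros i _. rewrite <- rsum_scal_r. auto. Qed.

Lemma ip_comb_ortho n d c e l : ortho n d e -> (l < d)%nat -> ip n (e l) (comb d c e) = c l.
Proof. intros Ho Hl. rewrite ip_sym, ip_comb_l.
 rewrite <- (rsum_delta d l c Hl). apply rsum_ext; intros k Hk.
 rewrite ip_sym, Ho by auto. destruct (Nat.eqb_spec l k), (Nat.eqb_spec k l); try lia; ring. Qed.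

Lemma norm_comb n d c e : ortho n d e -> ip n (comb d c e) (comb d c e) = rsum d (fun k => c k ^ 2).
Proof. intros Ho. rewrite ip_comb_l. apply rsum_ext; intros k Hk. rewrite ip_comb_ortho; auto; ring. Qed.

Lemma ip_minus_l n u v w : ip n (fun i => u i - v i) w = ip n u w - ip n v w.
Proof. unfold ip. rewrite <- rsum_minus. apply rsum_ext; intros; ring. Qed.

Lemma ip_ext n u u' v v' : (forall i, (i<n)%nat -> u i = u' i) -> (forall i, (i<n)%nat -> v i = v' i) -> ip n u v = ip n u' v'.
Proof. intros H1 H2; unfold ip; apply rsum_ext; intros; rewrite H1, H2; auto. Qed.

Lemma ip_pos n u : 0 <= ip n u u.
Proof. apply rsum_nonneg; intros; nra. Qed.

Lemma ip_expand n u w : ip n (fun i => u i - w i) (fun i => u i - w i) = ip n u u - 2 * ip n w u + ip n w w.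
Proof. unfold ip. rewrite <- rsum_scal, <- rsum_minus, <- rsum_plus. apply rsum_ext; intros; ring. Qed.

Lemma bessel n d e u : ortho n d e -> rsum d (fun k => (ip n (e k) u) ^ 2) <= ip n u u.
Proof. intros Ho. set (c := fun k => ip n (e k) u).
 pose proof (ip_pos n (fun i => u i - comb d c e i)) as P.
 rewrite ip_expand, norm_comb, ip_comb_l in P by auto.
 assert (E: rsum d (fun k => c k * ip n (e k) u) = rsum d (fun k => c k ^2)) by (apply rsum_ext; intros; unfold c; ring).
 rewrite E in P. change (rsum d (fun k => c k ^ 2) <= ip n u u). lra. Qed.

Lemma sumsq_zero n a : rsum n (fun i => a i * a i) = 0 -> forall i, (i < n)%nat -> a i = 0.
Proof. intros H i Hi. assert (a i * a i <= rsum n (fun i => a i * a i)).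
 apply (rsum_le_term n (fun i => a i * a i)); auto; intros; nra. nra. Qed.

Lemma covered_ext n d e v v' : (forall i, (i<n)%nat -> v i = v' i) -> covered n d e v -> covered n d e v'.
Proof. intros H [c Hc]; exists c; intros; rewrite <- H; auto. Qed.

Lemma covered_plus n d e u v : covered n d e u -> covered n d e v -> covered n d e (fun i => u i + v i).
Proof. intros [c Hc] [c' Hc']; exists (fun k => c k + c' k); intros i Hi. rewrite Hc, Hc' by auto.
 unfold comb. rewrite <- rsum_plus. apply rsum_ext; intros; ring. Qed.

Lemma covered_scal n d e a u : covered n d e u -> covered n d e (fun i => a * u i).
Proof. intros [c Hc]; exists (fun k => a * c k); intros i Hi. rewrite Hc by auto.
 unfold comb. rewrite <- rsum_scal. apply rsum_ext; intros; ring. Qed.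

Lemma covered_zero n d e : covered n d e (fun _ => 0).
Proof. exists (fun _ => 0); intros; unfold comb. rewrite (rsum_ext _ _ (fun _ => 0)); [rewrite rsum_zero; auto|]. intros; ring. Qed.

Lemma covered_rsum n d e m (f : nat -> nat -> R) : (forall k, (k<m)%nat -> covered n d e (f k)) ->
  covered n d e (fun i => rsum m (fun k => f k i)).
Proof. induction m; intros H. - simpl; apply covered_zero.
 - simpl. apply covered_plus; [apply IHm; intros; apply H; lia | apply H; lia]. Qed.

Lemma GS n N (v : nat -> nat -> R) : exists d e, (d <= N)%nat /\ ortho n d e /\ forall j, (j < N)%nat -> covered n d e (v j).
Proof.
 induction N.
 - exists 0%nat, (fun _ _ => 0). split; [lia|]. split. { intros k l Hk; exfalso; lia. } { intros j Hj; exfalso; lia. }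
 - destruct IHN as [d [e [Hd [Ho Hc]]]].
   set (c := fun k => ip n (e k) (v N)).
   set (r := fun i => v N i - comb d c e i).
   set (s := ip n r r).
   assert (Hr : forall k, (k < d)%nat -> ip n (e k) r = 0).
   { intros k Hk. unfold r. rewrite ip_sym, ip_minus_l, (ip_sym n (comb d c e)), ip_comb_ortho by auto. unfold c; rewrite ip_sym; ring. }
   destruct (Req_dec s 0) as [Hs|Hs].
   + exists d, e. split; [lia|]. split; auto. intros j Hj.
     destruct (Nat.eq_dec j N). 2:{ apply Hc; lia. }
     subst j. exists c. intros i Hi. pose proof (sumsq_zero n r Hs i Hi). unfold r in H. lra.
   + assert (Hsp : 0 < s) by (pose proof (ip_pos n r); fold s in H; lra).
     set (e' := fun k => if Nat.eqb k d then (fun i => r i / sqrt s) else e k).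
     exists (S d), e'. split; [lia|]. split.
     * intros k l Hk Hl. unfold e'.
       assert (Hsq : sqrt s * sqrt s = s) by (apply sqrt_sqrt; lra).
       assert (Hsq0 : 0 < sqrt s) by (apply sqrt_lt_R0; lra).
       destruct (Nat.eqb_spec k d), (Nat.eqb_spec l d).
       -- subst. rewrite Nat.eqb_refl. unfold ip. rewrite (rsum_ext _ _ (fun i => / s * (r i * r i))).
          rewrite rsum_scal. fold (ip n r r). fold s. field; lra. intros; replace (/ s) with (/ (sqrt s * sqrt s)) by (rewrite Hsq; auto); field; lra.
       -- destruct (Nat.eqb_spec k l); [lia|]. unfold ip. rewrite (rsum_ext _ _ (fun i => / sqrt s * (e l i * r i))).
          rewrite rsum_scal. fold (ip n (e l) r). rewrite Hr by lia; ring. intros; field; lra.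
       -- destruct (Nat.eqb_spec k l); [lia|]. unfold ip. rewrite (rsum_ext _ _ (fun i => / sqrt s * (e k i * r i))).
          rewrite rsum_scal. fold (ip n (e k) r). rewrite Hr by lia; ring. intros; field; lra.
       -- apply Ho; lia.
     * assert (Hcomb : forall a, comb (S d) a e' = fun i => comb d a e i + a d * (r i / sqrt s)).
       { intros a. unfold comb. apply FunctionalExtensionality.functional_extensionality; intros i. simpl.
         f_equal. apply rsum_ext; intros k Hk. unfold e'. destruct (Nat.eqb_spec k d); [lia|auto].
         unfold e'; rewrite Nat.eqb_refl; auto. }
       intros j Hj. destruct (Nat.eq_dec j N).
       -- subst j. exists (fun k => if Nat.eqb k d then sqrt s else c k). intros i Hi. rewrite Hcomb.
          rewrite Nat.eqb_refl. assert (comb d (fun k => if Nat.eqb k d then sqrt s else c k) e i = comb d c e i).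
          { unfold comb. apply rsum_ext; intros k Hk. destruct (Nat.eqb_spec k d); [lia|auto]. }
          rewrite H. assert (0 < sqrt s) by (apply sqrt_lt_R0; lra). unfold r. field. lra.
       -- destruct (Hc j ltac:(lia)) as [a Ha]. exists (fun k => if Nat.eqb k d then 0 else a k).
          intros i Hi. rewrite Hcomb, Nat.eqb_refl, Ha by auto.
          assert (comb d (fun k => if Nat.eqb k d then 0 else a k) e i = comb d a e i).
          { unfold comb. apply rsum_ext; intros k Hk. destruct (Nat.eqb_spec k d); [lia|auto]. }
          rewrite H; ring.
Qed.

Lemma exp_le x y : x <= y -> exp x <= exp y.
Proof. intros [H|H]; [left; apply exp_increasing; auto| subst; lra]. Qed.

Lemma Rabs_le_inv x a : Rabs x <= a -> -a <= x <= a.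
Proof. unfold Rabs; destruct (Rcase_abs x); lra. Qed.
Lemma Rabs_pow2 x : Rabs x ^ 2 = x ^ 2.
Proof. apply pow2_abs. Qed.

Lemma exp_quad y : Rabs y <= /2 -> exp y <= 1 + y + 2 * y^2.
Proof. intros Hy. pose proof (exp_ineq1_le (-y)). rewrite exp_Ropp in H.
 pose proof (exp_pos y). apply Rabs_le_inv in Hy.
 assert (0 < 1 - y) by lra.
 assert (exp y * (1 - y) <= 1).
 { apply (Rmult_le_compat_l (exp y)) in H; [|lra]. rewrite Rinv_r in H by lra. lra. }
 assert (1 <= (1 - y) * (1 + y + 2 * y^2)) by nra.
 apply (Rmult_le_reg_r (1 - y)); nra. Qed.

Lemma hoeff1 p xT xF a : 0 <= p <= 1 -> p * xT + (1 - p) * xF = 0 -> Rabs xT <= 1 -> Rabs xF <= 1 ->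
  p * exp (a * xT) + (1 - p) * exp (a * xF) <= exp (2 * a^2).
Proof. intros Hp H0 HT HF.
 destruct (Rle_dec (Rabs a) (/2)) as [Ha|Ha].
 - assert (Rabs (a*xT) <= /2) by (rewrite Rabs_mult; pose proof (Rabs_pos a); pose proof (Rabs_pos xT); nra).
   assert (Rabs (a*xF) <= /2) by (rewrite Rabs_mult; pose proof (Rabs_pos a); pose proof (Rabs_pos xF); nra).
   pose proof (exp_quad _ H). pose proof (exp_quad _ H1).
   pose proof (exp_ineq1_le (2 * a^2)).
   assert (xT^2 <= 1) by (rewrite <- (Rabs_pow2 xT) ; pose proof (Rabs_pos xT); nra).
   assert (xF^2 <= 1) by (rewrite <- (Rabs_pow2 xF); pose proof (Rabs_pos xF); nra).
   assert (Hb : p * exp (a * xT) + (1 - p) * exp (a * xF) <= p * (1 + a*xT + 2*(a*xT)^2) + (1-p) * (1 + a*xF + 2*(a*xF)^2)).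
   { apply Rplus_le_compat; apply Rmult_le_compat_l; lra. }
   assert (p*xT^2 + (1-p)*xF^2 <= 1) by nra.
   replace (p * (1 + a*xT + 2*(a*xT)^2) + (1-p) * (1 + a*xF + 2*(a*xF)^2)) with
     (1 + a * (p * xT + (1 - p) * xF) + 2 * a^2 * (p*xT^2 + (1-p)*xF^2)) in Hb by ring.
   rewrite H0 in Hb. assert (0 <= a^2) by nra. nra.
 - assert (exp (a * xT) <= exp (2 * a^2)).
   { apply exp_le. assert (a * xT <= Rabs a). { rewrite <- (Rabs_right (Rabs a)) by (apply Rle_ge, Rabs_pos).
       replace (Rabs (Rabs a)) with (Rabs a * 1) by (rewrite Rabs_Rabsolu; ring). 
       apply Rle_trans with (Rabs (a * xT)); [apply Rle_abs|]. rewrite Rabs_mult. apply Rmult_le_compat_l; auto. apply Rabs_pos. }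
     rewrite <- Rabs_pow2 in *. pose proof (Rabs_pos a). nra. }
   assert (exp (a * xF) <= exp (2 * a^2)).
   { apply exp_le. assert (a * xF <= Rabs a). { apply Rle_trans with (Rabs (a * xF)); [apply Rle_abs|]. rewrite Rabs_mult.
       pose proof (Rabs_pos a). nra. }
     rewrite <- Rabs_pow2. pose proof (Rabs_pos a). nra. }
   nra.
Qed.

Definition sumL (l : list (list bool)) (h : list bool -> R) : R := fold_right (fun d acc => h d + acc) 0 l.

Lemma sumL_app l1 l2 h : sumL (l1 ++ l2) h = sumL l1 h + sumL l2 h.
Proof. induction l1; simpl; [lra|]. rewrite IHl1; lra. Qed.
Lemma sumL_map l g h : sumL (map g l) h = sumL l (fun d => h (g d)).
Proof. induction l; simpl; auto. rewrite IHl; auto. Qed.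
Lemma sumL_plus l h1 h2 : sumL l (fun d => h1 d + h2 d) = sumL l h1 + sumL l h2.
Proof. induction l; simpl; [lra|]. rewrite IHl; lra. Qed.
Lemma sumL_scal l c h : sumL l (fun d => c * h d) = c * sumL l h.
Proof. induction l; simpl; [lra|]. rewrite IHl; lra. Qed.
Lemma sumL_le l h1 h2 : (forall d, h1 d <= h2 d) -> sumL l h1 <= sumL l h2.
Proof. intros H; induction l; simpl; [lra|]. specialize (H a); lra. Qed.
Lemma sumL_ext l h1 h2 : (forall d, h1 d = h2 d) -> sumL l h1 = sumL l h2.
Proof. intros H; induction l; simpl; [lra|]. rewrite H, IHl; lra. Qed.

Lemma ce_sumL n p L : cond_exp n p L = sumL (all_bools n) (fun d => bern_prob n p d * L d).
Proof. unfold cond_exp, sumL. auto. Qed.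

Lemma rprod_shift n f : rprod (S n) f = f 0%nat * rprod n (fun i => f (S i)).
Proof. induction n; simpl in *; [lra|]. rewrite IHn; lra. Qed.

Lemma bern_cons n p b d : bern_prob (S n) p (b :: d) =
  (if b then p 0%nat else 1 - p 0%nat) * bern_prob n (fun i => p (S i)) d.
Proof. unfold bern_prob. rewrite rprod_shift. simpl nth. auto. Qed.

Lemma ce_S n p L : cond_exp (S n) p L =
  p 0%nat * cond_exp n (fun i => p (S i)) (fun d => L (true :: d)) +
  (1 - p 0%nat) * cond_exp n (fun i => p (S i)) (fun d => L (false :: d)).
Proof. rewrite !ce_sumL. simpl all_bools. rewrite sumL_app, !sumL_map.
 rewrite <- !sumL_scal. f_equal; apply sumL_ext; intros d; rewrite bern_cons; simpl; ring. Qed.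

Lemma ce_0 p L : cond_exp 0 p L = L nil.
Proof. unfold cond_exp; simpl. unfold bern_prob; simpl. ring. Qed.

Lemma ce_plus n p L1 L2 : cond_exp n p (fun d => L1 d + L2 d) = cond_exp n p L1 + cond_exp n p L2.
Proof. rewrite !ce_sumL, <- sumL_plus. apply sumL_ext; intros; ring. Qed.
Lemma ce_scal n p c L : cond_exp n p (fun d => c * L d) = c * cond_exp n p L.
Proof. rewrite !ce_sumL, <- sumL_scal. apply sumL_ext; intros; ring. Qed.
Lemma ce_ext n p L1 L2 : (forall d, L1 d = L2 d) -> cond_exp n p L1 = cond_exp n p L2.
Proof. intros H; rewrite !ce_sumL; apply sumL_ext; intros; rewrite H; auto. Qed.

Definition pok (p : nat -> R) := forall i, 0 <= p i <= 1.

Lemma bern_nonneg n p d : pok p -> 0 <= bern_prob n p d.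
Proof. intros Hp. unfold bern_prob. induction n; simpl; [lra|].
 apply Rmult_le_pos; auto. destruct (nth n d false); specialize (Hp n); lra. Qed.

Lemma ce_le n p L1 L2 : pok p -> (forall d, L1 d <= L2 d) -> cond_exp n p L1 <= cond_exp n p L2.
Proof. intros Hp H. rewrite !ce_sumL; apply sumL_le; intros d. apply Rmult_le_compat_l; auto. apply bern_nonneg; auto. Qed.

Lemma ce_const n p c : cond_exp n p (fun _ => c) = c.
Proof. revert p; induction n; intros p. - rewrite ce_0; auto.
 - rewrite ce_S, !IHn. ring. Qed.

Lemma ce_minus n p L1 L2 : cond_exp n p (fun d => L1 d - L2 d) = cond_exp n p L1 - cond_exp n p L2.
Proof. rewrite (ce_ext n p _ (fun d => L1 d + (-1) * L2 d)) by (intros; ring). rewrite ce_plus, ce_scal; ring. Qed.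

Lemma ce_nonneg n p L : pok p -> (forall d, 0 <= L d) -> 0 <= cond_exp n p L.
Proof. intros Hp H. rewrite <- (ce_const n p 0). apply ce_le; auto. Qed.

Lemma sumL_swap l1 l2 G : sumL l1 (fun d => sumL l2 (fun s => G d s)) = sumL l2 (fun s => sumL l1 (fun d => G d s)).
Proof. induction l1; simpl. - induction l2; simpl; auto. rewrite <- IHl2; lra.
 - rewrite IHl1. rewrite <- sumL_plus. auto. Qed.

Lemma sumL_scal_in l c h : sumL l (fun d => h d * c) = sumL l h * c.
Proof. induction l; simpl; [lra|]. rewrite IHl; lra. Qed.

Lemma ce_swap n m p q G : cond_exp n p (fun d => cond_exp m q (fun s => G d s)) =
  cond_exp m q (fun s => cond_exp n p (fun d => G d s)).
Proof. rewrite !ce_sumL. rewrite (sumL_ext _ _ (fun d => sumL (all_bools m) (fun s => bern_prob n p d * (bern_prob m q s * G d s)))).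
 rewrite sumL_swap. apply sumL_ext; intros s. rewrite ce_sumL, <- sumL_scal. apply sumL_ext; intros; ring.
 intros d. rewrite ce_sumL, <- sumL_scal. auto. Qed.

Lemma jensen n p L : pok p -> exp (cond_exp n p L) <= cond_exp n p (fun d => exp (L d)).
Proof. intros Hp. set (m := cond_exp n p L).
 assert (forall d, exp m * (1 + (L d - m)) <= exp (L d)).
 { intros d. replace (L d) with (m + (L d - m)) at 2 by ring. rewrite exp_plus.
   apply Rmult_le_compat_l; [left; apply exp_pos| apply exp_ineq1_le]. }
 pose proof (ce_le n p _ _ Hp H). rewrite ce_scal, ce_plus, ce_const, ce_minus, ce_const in H0.
 fold m in H0. lra. Qed.

Lemma hoeff_cond n : forall p xi (Sel : nat -> bool) (a : nat -> list bool -> R) (H : list bool -> R),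
 pok p ->
 (forall i, p i * xi i true + (1 - p i) * xi i false = 0) ->
 (forall i b, Rabs (xi i b) <= 1) ->
 (forall d, 0 <= H d) ->
 (forall d d', (forall j, Sel j = false -> nth j d false = nth j d' false) -> H d = H d' /\ forall i, a i d = a i d') ->
 cond_exp n p (fun d => H d * exp (rsum n (fun i => if Sel i then a i d * xi i (nth i d false) else 0)))
 <= cond_exp n p (fun d => H d * exp (2 * rsum n (fun i => if Sel i then (a i d)^2 else 0))).
Proof.
 induction n; intros p xi Sel a H Hp Hm Hb HH Hdep.
 - rewrite !ce_0. simpl. rewrite Rmult_0_r; lra.
 - rewrite !ce_S.
   assert (Hp' : pok (fun i => p (S i))) by (intros i; apply Hp).
   assert (Hp0 := Hp 0%nat).
   set (p' := fun i => p (S i)).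
   destruct (Sel 0%nat) eqn:HS0.
   + (* coordinate 0 is integrated *)
     assert (Hc : forall d0, H (true :: d0) = H (false :: d0) /\ forall i, a i (true :: d0) = a i (false :: d0)).
     { intros d0. apply Hdep. intros [|j] Hj; [congruence| auto]. }
     set (R0 := fun d0 => rsum n (fun i => if Sel (S i) then a (S i) (true :: d0) * xi (S i) (nth i d0 false) else 0)).
     set (Q0 := fun d0 => rsum n (fun i => if Sel (S i) then (a (S i) (true :: d0))^2 else 0)).
     assert (EL : forall b d0, rsum (Datatypes.S n) (fun i => if Sel i then a i (b :: d0) * xi i (nth i (b :: d0) false) else 0)
        = a 0%nat (true :: d0) * xi 0%nat b + R0 d0).
     { intros b d0. rewrite rsum_shift, HS0. simpl nth. unfold R0. destruct b; [auto|].
       destruct (Hc d0) as [_ Ha]. rewrite Ha. f_equal. apply rsum_ext; intros i _. rewrite Ha; auto. }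
     assert (ER : forall b d0, rsum (Datatypes.S n) (fun i => if Sel i then (a i (b :: d0))^2 else 0)
        = (a 0%nat (true :: d0))^2 + Q0 d0).
     { intros b d0. rewrite rsum_shift, HS0. unfold Q0. destruct b; [auto|].
       destruct (Hc d0) as [_ Ha]. rewrite Ha. f_equal. apply rsum_ext; intros i _. rewrite Ha; auto. }
     rewrite (ce_ext _ _ (fun d => H (true :: d) * _) (fun d => H (true :: d) * exp (a 0%nat (true :: d) * xi 0%nat true + R0 d)))
       by (intros; rewrite EL; auto).
     rewrite (ce_ext _ _ (fun d => H (false :: d) * _) (fun d => H (true :: d) * exp (a 0%nat (true :: d) * xi 0%nat false + R0 d)))
       by (intros d; rewrite EL; destruct (Hc d) as [Hh _]; rewrite Hh; auto).
     rewrite (ce_ext _ _ (fun d => H (true :: d) * exp (2 * _)) (fun d => H (true :: d) * exp (2 * (a 0%nat (true :: d))^2) * exp (2 * Q0 d)))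
       by (intros; rewrite ER, Rmult_plus_distr_l, exp_plus; ring).
     rewrite (ce_ext _ _ (fun d => H (false :: d) * exp (2 * _)) (fun d => H (true :: d) * exp (2 * (a 0%nat (true :: d))^2) * exp (2 * Q0 d)))
       by (intros d; rewrite ER, Rmult_plus_distr_l, exp_plus; destruct (Hc d) as [Hh _]; rewrite Hh; ring).
     rewrite <- !ce_scal, <- !ce_plus.
     apply Rle_trans with (cond_exp n p' (fun d => H (true :: d) * exp (2 * (a 0%nat (true :: d))^2) * exp (R0 d))).
     { apply ce_le; auto. intros d. rewrite !exp_plus.
       pose proof (hoeff1 (p 0%nat) (xi 0%nat true) (xi 0%nat false) (a 0%nat (true :: d)) Hp0 (Hm 0%nat) (Hb _ _) (Hb _ _)).
       pose proof (HH (true :: d)). pose proof (exp_pos (R0 d)).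
       assert (0 <= H (true :: d) * exp (R0 d)) by (apply Rmult_le_pos; lra).
       apply (Rmult_le_compat_l _ _ _ H3) in H0. 
       match goal with |- ?l <= ?r => replace l with (H (true :: d) * exp (R0 d) * (p 0%nat * exp (a 0%nat (true :: d) * xi 0%nat true) +
          (1 - p 0%nat) * exp (a 0%nat (true :: d) * xi 0%nat false))) by ring;
          replace r with (H (true :: d) * exp (R0 d) * exp (2 * a 0%nat (true :: d) ^ 2)) by ring end. auto. }
     rewrite (ce_ext _ _ (fun d => p 0%nat * _ + _) (fun d => H (true :: d) * exp (2 * (a 0%nat (true :: d))^2) * exp (2 * Q0 d)))
       by (intros; ring).
     unfold R0, Q0.
     apply (IHn p' (fun i => xi (S i)) (fun i => Sel (S i)) (fun i d => a (S i) (true :: d))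
              (fun d => H (true :: d) * exp (2 * (a 0%nat (true :: d))^2))); auto.
     * intros i; apply (Hm (S i)).
     * intros d. pose proof (HH (true :: d)); pose proof (exp_pos (2 * (a 0%nat (true :: d))^2)). nra.
     * intros d d' Hdd. destruct (Hdep (true :: d) (true :: d')) as [E1 E2].
       { intros [|j] Hj; [congruence| simpl; auto]. }
       split; [rewrite E1, (E2 0%nat); auto| intros; apply E2].
   + assert (EL : forall b d0, rsum (Datatypes.S n) (fun i => if Sel i then a i (b :: d0) * xi i (nth i (b :: d0) false) else 0)
        = rsum n (fun i => if Sel (S i) then a (S i) (b :: d0) * xi (S i) (nth i d0 false) else 0)).
     { intros b d0. rewrite rsum_shift, HS0. simpl nth. ring. }
     assert (ER : forall b d0, rsum (Datatypes.S n) (fun i => if Sel i then (a i (b :: d0))^2 else 0)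
        = rsum n (fun i => if Sel (S i) then (a (S i) (b :: d0))^2 else 0)).
     { intros b d0. rewrite rsum_shift, HS0. ring. }
     apply Rplus_le_compat; apply Rmult_le_compat_l; try lra.
     * rewrite (ce_ext _ _ _ (fun d => H (true :: d) * exp (rsum n (fun i => if Sel (S i) then a (S i) (true :: d) * xi (S i) (nth i d false) else 0))))
         by (intros; rewrite EL; auto).
       rewrite (ce_ext _ _ (fun d => H (true :: d) * exp (2 * _)) (fun d => H (true :: d) * exp (2 * rsum n (fun i => if Sel (S i) then (a (S i) (true :: d))^2 else 0))))
         by (intros; rewrite ER; auto).
       apply (IHn p' (fun i => xi (S i)) (fun i => Sel (S i)) (fun i d => a (S i) (true :: d)) (fun d => H (true :: d))); auto.
       intros i; apply (Hm (S i)).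
       intros d d' Hdd. destruct (Hdep (true :: d) (true :: d')) as [E1 E2].
       { intros [|j] Hj; [auto| simpl; auto]. }
       split; [exact E1| intros; apply E2].
     * rewrite (ce_ext _ _ _ (fun d => H (false :: d) * exp (rsum n (fun i => if Sel (S i) then a (S i) (false :: d) * xi (S i) (nth i d false) else 0))))
         by (intros; rewrite EL; auto).
       rewrite (ce_ext _ _ (fun d => H (false :: d) * exp (2 * _)) (fun d => H (false :: d) * exp (2 * rsum n (fun i => if Sel (S i) then (a (S i) (false :: d))^2 else 0))))
         by (intros; rewrite ER; auto).
       apply (IHn p' (fun i => xi (S i)) (fun i => Sel (S i)) (fun i d => a (S i) (false :: d)) (fun d => H (false :: d))); auto.
       intros i; apply (Hm (S i)).
       intros d d' Hdd. destruct (Hdep (false :: d) (false :: d')) as [E1 E2].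
       { intros [|j] Hj; [auto| simpl; auto]. }
       split; [exact E1| intros; apply E2].
Qed.

Definition eps (p : nat -> R) (i : nat) (dl : list bool) : R := (if nth i dl false then 1 else 0) - p i.
Definition xeps (p : nat -> R) (i : nat) (b : bool) : R := (if b then 1 else 0) - p i.

Lemma eps_xeps p i dl : eps p i dl = xeps p i (nth i dl false).
Proof. auto. Qed.

Lemma xeps_mean p : pok p -> forall i, p i * xeps p i true + (1 - p i) * xeps p i false = 0.
Proof. intros Hp i; unfold xeps; ring. Qed.

Lemma xeps_bound p : pok p -> forall i b, Rabs (xeps p i b) <= 1.
Proof. intros Hp i b; specialize (Hp i); unfold xeps; destruct b; apply Rabs_le; lra. Qed.

Lemma eps_bound p i dl : pok p -> Rabs (eps p i dl) <= 1.
Proof. intros Hp; rewrite eps_xeps; apply xeps_bound; auto. Qed.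

Lemma ce_rsum n p K (f : nat -> list bool -> R) :
  cond_exp n p (fun dl => rsum K (fun k => f k dl)) = rsum K (fun k => cond_exp n p (f k)).
Proof. induction K; simpl. - apply ce_const. - rewrite ce_plus, IHK; auto. Qed.

Lemma hoeff_lin n p (b : nat -> R) : pok p ->
  cond_exp n p (fun dl => exp (rsum n (fun i => b i * eps p i dl))) <= exp (2 * rsum n (fun i => b i ^ 2)).
Proof. intros Hp.
 pose proof (hoeff_cond n p (xeps p) (fun _ => true) (fun i _ => b i) (fun _ => 1) Hp (xeps_mean p Hp) (xeps_bound p Hp)
   ltac:(intros; lra) ltac:(intros; split; auto)) as H.
 rewrite (ce_ext _ _ (fun d => 1 * _) (fun dl => exp (rsum n (fun i => b i * eps p i dl)))) in H by (intros; rewrite Rmult_1_l; auto).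
 rewrite (ce_ext _ _ (fun d => 1 * _) (fun dl => exp (2 * rsum n (fun i => b i ^ 2)))) in H by (intros; rewrite Rmult_1_l; auto).
 rewrite ce_const in H. auto. Qed.

Lemma geom_sum N r : 0 <= r < 1 -> rsum N (fun k => r ^ k) <= / (1 - r).
Proof. intros Hr. assert (rsum N (fun k => r ^ k) * (1 - r) = 1 - r ^ N).
 { induction N; simpl; [ring|]. rewrite Rmult_plus_distr_r, IHN. simpl. ring. }
 assert (0 <= r ^ N) by (apply pow_le; lra).
 apply (Rmult_le_reg_r (1 - r)); [lra|]. rewrite H, Rinv_l by lra. lra. Qed.

Lemma exp_nat k x : exp (INR k * x) = exp x ^ k.
Proof. induction k. - simpl; rewrite Rmult_0_l, exp_0; auto.
 - rewrite S_INR, Rmult_plus_distr_r, Rmult_1_l, exp_plus, IHk. simpl. ring. Qed.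

Lemma floor_ex (y : R) (K : nat) : 0 <= y -> y < INR K + 1 -> exists k, (k <= K)%nat /\ INR k <= y < INR k + 1.
Proof. induction K; intros H0 H1.
 - exists 0%nat; simpl in *; split; [lia|lra].
 - destruct (Rlt_dec y (INR K + 1)).
   + destruct (IHK H0 r) as [k [Hk Hk2]]. exists k; split; [lia|auto].
   + exists (S K). split; [lia|]. rewrite S_INR in *. lra. Qed.

Lemma lin_bound n p b dl : pok p -> (forall j, (j < n)%nat -> Rabs (b j) <= 1) ->
  Rabs (rsum n (fun j => b j * eps p j dl)) <= INR n.
Proof. intros Hp Hbj. induction n. - simpl. rewrite Rabs_R0; lra.
  - rewrite S_INR. simpl rsum. eapply Rle_trans; [apply Rabs_triang|]. rewrite Rabs_mult.
    pose proof (Hbj n ltac:(lia)). pose proof (eps_bound p n dl Hp). pose proof (Rabs_pos (b n)). pose proof (Rabs_pos (eps p n dl)).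
    assert (IH : Rabs (rsum n (fun j => b j * eps p j dl)) <= INR n) by (apply IHn; intros; apply Hbj; lia). nra. Qed.

Definition C0 : R := 2 * exp (/16) / (1 - exp (- / 16)).

Lemma C0_pos : 0 < C0.
Proof. unfold C0. assert (exp (-/16) < 1). { rewrite <- exp_0. apply exp_increasing. lra. }
 pose proof (exp_pos (/16)). apply Rdiv_lt_0_compat; lra. Qed.

Lemma subg_sq n p (b : nat -> R) c : pok p -> rsum n (fun j => b j ^ 2) <= 1 -> 0 <= c <= /16 ->
  cond_exp n p (fun dl => exp (c * (rsum n (fun j => b j * eps p j dl)) ^ 2)) <= C0.
Proof.
 intros Hp Hb Hc.
 set (Y := fun dl => rsum n (fun j => b j * eps p j dl)).
 assert (Hbj : forall j, (j < n)%nat -> Rabs (b j) <= 1).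
 { intros j Hj. assert (b j ^ 2 <= 1). { eapply Rle_trans; [|apply Hb]. apply (rsum_le_term n (fun j => b j ^ 2)); auto. intros; nra. }
   rewrite <- Rabs_pow2 in H. pose proof (Rabs_pos (b j)). nra. }
 assert (HY : forall dl, Rabs (Y dl) <= INR n).
 { intros dl. apply lin_bound; auto. }
 set (K := (n * n)%nat).
 set (a := fun k : nat => sqrt (INR k) / 4).
 set (T := fun k dl => exp (c * (INR k + 1)) * (exp (a k * (Y dl - sqrt (INR k))) + exp (a k * (- Y dl - sqrt (INR k))))).
 assert (Hpt : forall dl, exp (c * (Y dl) ^ 2) <= rsum (S K) (fun k => T k dl)).
 { intros dl. assert (HY2 : (Y dl)^2 < INR K + 1).
   { unfold K. rewrite mult_INR. rewrite <- Rabs_pow2. pose proof (HY dl). pose proof (Rabs_pos (Y dl)). nra. }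
   destruct (floor_ex ((Y dl)^2) K ltac:(nra) HY2) as [k [Hk Hk2]].
   apply Rle_trans with (T k dl).
   2:{ apply (rsum_le_term (S K) (fun k => T k dl)); [lia|]. intros j _. unfold T.
       pose proof (exp_pos (c * (INR j + 1))). pose proof (exp_pos (a j * (Y dl - sqrt (INR j)))).
       pose proof (exp_pos (a j * (- Y dl - sqrt (INR j)))). nra. }
   unfold T. assert (Hsq : sqrt (INR k) <= Rabs (Y dl)).
   { rewrite <- (sqrt_Rsqr (Rabs (Y dl))) by apply Rabs_pos. apply sqrt_le_1_alt. unfold Rsqr. rewrite <- Rabs_pow2 in Hk2. nra. }
   assert (Ha : 0 <= a k) by (unfold a; pose proof (sqrt_pos (INR k)); lra).
   assert (1 <= exp (a k * (Y dl - sqrt (INR k))) + exp (a k * (- Y dl - sqrt (INR k)))).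
   { unfold Rabs in Hsq. destruct (Rcase_abs (Y dl)).
     - pose proof (exp_ineq1_le (a k * (- Y dl - sqrt (INR k)))). pose proof (exp_pos (a k * (Y dl - sqrt (INR k)))). nra.
     - pose proof (exp_ineq1_le (a k * (Y dl - sqrt (INR k)))). pose proof (exp_pos (a k * (- Y dl - sqrt (INR k)))). nra. }
   assert (exp (c * Y dl ^ 2) <= exp (c * (INR k + 1))) by (apply exp_le; nra).
   pose proof (exp_pos (c * (INR k + 1))). nra. }
 apply Rle_trans with (cond_exp n p (fun dl => rsum (S K) (fun k => T k dl))).
 { apply ce_le; auto. }
 rewrite ce_rsum.
 set (r := exp (- / 16)).
 assert (Hr : 0 <= r < 1) by (unfold r; split; [left; apply exp_pos| rewrite <- exp_0; apply exp_increasing; lra]).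
 apply Rle_trans with (rsum (S K) (fun k => 2 * exp (/16) * r ^ k)).
 - apply rsum_le; intros k _. unfold T.
   rewrite ce_scal, ce_plus.
   assert (E1 : cond_exp n p (fun dl => exp (a k * (Y dl - sqrt (INR k)))) <= exp (2 * a k ^ 2 - a k * sqrt (INR k))).
   { rewrite (ce_ext _ _ _ (fun dl => exp (- (a k * sqrt (INR k))) * exp (rsum n (fun j => (a k * b j) * eps p j dl)))).
     rewrite ce_scal. apply Rle_trans with (exp (- (a k * sqrt (INR k))) * exp (2 * rsum n (fun j => (a k * b j) ^ 2))).
     apply Rmult_le_compat_l; [left; apply exp_pos| apply hoeff_lin; auto].
     rewrite <- exp_plus. apply exp_le. rewrite (rsum_ext _ _ (fun j => a k ^2 * b j ^ 2)) by (intros; ring).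
     rewrite rsum_scal. assert (0 <= a k ^ 2) by nra. nra.
     intros dl. rewrite <- exp_plus. f_equal. unfold Y. rewrite (rsum_ext n (fun j => a k * b j * eps p j dl) (fun j => a k * (b j * eps p j dl))) by (intros; ring).
     rewrite rsum_scal. ring. }
   assert (E2 : cond_exp n p (fun dl => exp (a k * (- Y dl - sqrt (INR k)))) <= exp (2 * a k ^ 2 - a k * sqrt (INR k))).
   { rewrite (ce_ext _ _ _ (fun dl => exp (- (a k * sqrt (INR k))) * exp (rsum n (fun j => (- a k * b j) * eps p j dl)))).
     rewrite ce_scal. apply Rle_trans with (exp (- (a k * sqrt (INR k))) * exp (2 * rsum n (fun j => (- a k * b j) ^ 2))).
     apply Rmult_le_compat_l; [left; apply exp_pos| apply hoeff_lin; auto].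
     rewrite <- exp_plus. apply exp_le. rewrite (rsum_ext _ _ (fun j => a k ^2 * b j ^ 2)) by (intros; ring).
     rewrite rsum_scal. assert (0 <= a k ^ 2) by nra. nra.
     intros dl. rewrite <- exp_plus. f_equal. unfold Y. rewrite (rsum_ext n (fun j => - a k * b j * eps p j dl) (fun j => (- a k) * (b j * eps p j dl))) by (intros; ring).
     rewrite rsum_scal. ring. }
   assert (Hak : 2 * a k ^ 2 - a k * sqrt (INR k) = - INR k / 8).
   { unfold a. assert (sqrt (INR k) * sqrt (INR k) = INR k) by (apply sqrt_sqrt, pos_INR). field_simplify. 
     replace (sqrt (INR k) ^ 2) with (INR k) by (simpl; rewrite Rmult_1_r; auto). field. }
   rewrite Hak in E1, E2.
   assert (exp (c * (INR k + 1)) * exp (- INR k / 8) <= exp (/16) * r ^ k).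
   { rewrite <- exp_plus. unfold r. rewrite <- exp_nat, <- exp_plus. apply exp_le. pose proof (pos_INR k). nra. }
   pose proof (exp_pos (c * (INR k + 1))). nra.
 - rewrite rsum_scal. unfold C0. fold r. pose proof (geom_sum (S K) r Hr). pose proof (exp_pos (/16)).
   unfold Rdiv. apply Rmult_le_compat_l; [lra| auto].
Qed.

Definition Pm (d : nat) (e : nat -> nat -> R) i j := rsum d (fun k => e k i * e k j).
Definition Yk (n : nat) (p : nat -> R) (e : nat -> nat -> R) k dl := rsum n (fun i => e k i * eps p i dl).
Definition Xq n p d e dl := rsum d (fun k => (Yk n p e k dl) ^ 2).

Lemma decomp n p d e dl : Xq n p d e dl =
  rsum n (fun i => Pm d e i i * eps p i dl ^ 2) +
  rsum n (fun i => rsum n (fun j => if Nat.eqb i j then 0 else Pm d e i j * eps p i dl * eps p j dl)).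
Proof. unfold Xq, Yk. rewrite (rsum_ext d _ (fun k => rsum n (fun i => rsum n (fun j => e k i * e k j * (eps p i dl * eps p j dl))))).
 2:{ intros k _. rewrite rsum_sq. apply rsum_ext; intros i _; apply rsum_ext; intros; ring. }
 rewrite rsum_swap. rewrite <- rsum_plus. apply rsum_ext; intros i Hi.
 rewrite rsum_swap. rewrite (rsum_split_diag n _ i Hi).
 f_equal. - unfold Pm. rewrite <- rsum_scal_r. apply rsum_ext; intros; ring.
 - apply rsum_ext; intros j _. destruct (Nat.eqb i j); auto. unfold Pm. rewrite <- rsum_scal_r, <- rsum_scal_r. apply rsum_ext; intros; ring.
Qed.

Lemma trace_P n d e : ortho n d e -> rsum n (fun i => Pm d e i i) = INR d.
Proof. intros Ho. unfold Pm. rewrite <- rsum_swap. rewrite (rsum_ext d _ (fun _ => 1)).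
 rewrite rsum_const; ring. intros k Hk. pose proof (Ho k k Hk Hk). rewrite Nat.eqb_refl in H. rewrite <- H. unfold ip; auto. Qed.

Lemma Pii_bounds n d e i : ortho n d e -> (i < n)%nat -> 0 <= Pm d e i i <= 1.
Proof. intros Ho Hi. split. - apply rsum_nonneg; intros; nra.
 - set (u := fun j => if Nat.eqb i j then 1 else 0).
   pose proof (bessel n d e u Ho).
   assert (Hu : ip n u u = 1). { unfold ip. rewrite (rsum_ext n _ (fun j => 1 * (if Nat.eqb i j then 1 else 0))). apply (rsum_delta n i (fun _ => 1) Hi).
     intros j _; unfold u; destruct (Nat.eqb i j); ring. }
   assert (He : forall k, ip n (e k) u = e k i). { intros k. unfold ip, u. apply (rsum_delta n i (e k) Hi). }
   rewrite Hu in H. unfold Pm. rewrite (rsum_ext d _ (fun k => ip n (e k) u ^ 2)). auto. intros k _. rewrite He; ring. Qed.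

Definition xi2 (p : nat -> R) i b := (xeps p i b) ^ 2 - p i * (1 - p i).

Definition Diag n p d e dl := rsum n (fun i => Pm d e i i * xi2 p i (nth i dl false)).
Definition Zq n p d e dl := rsum n (fun i => rsum n (fun j => if Nat.eqb i j then 0 else Pm d e i j * eps p i dl * eps p j dl)).

Lemma X_le n p d e dl : pok p -> ortho n d e -> Xq n p d e dl <= INR d / 4 + Diag n p d e dl + Zq n p d e dl.
Proof. intros Hp Ho. rewrite decomp. unfold Zq, Diag.
 assert (rsum n (fun i => Pm d e i i * eps p i dl ^ 2) = rsum n (fun i => Pm d e i i * (p i * (1 - p i))) + rsum n (fun i => Pm d e i i * xi2 p i (nth i dl false))).
 { rewrite <- rsum_plus. apply rsum_ext; intros. unfold xi2. rewrite <- eps_xeps. ring. }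
 rewrite H. assert (rsum n (fun i => Pm d e i i * (p i * (1 - p i))) <= rsum n (fun i => Pm d e i i * /4)).
 { apply rsum_le; intros i Hi. destruct (Pii_bounds n d e i Ho Hi). specialize (Hp i). apply Rmult_le_compat_l; [lra|]. assert (0 <= (p i - /2)^2) by apply pow2_ge_0. assert (p i * (1 - p i) = /4 - (p i - /2)^2) by field. lra. }
 rewrite rsum_scal_r, trace_P in H0 by auto. lra. Qed.

Lemma diag_mgf n p d e t : pok p -> ortho n d e -> cond_exp n p (fun dl => exp (t * Diag n p d e dl)) <= exp (2 * t ^ 2 * INR d).
Proof. intros Hp Ho.
 assert (Hm : forall i, p i * xi2 p i true + (1 - p i) * xi2 p i false = 0) by (intros; unfold xi2, xeps; ring).
 assert (Hb : forall i b, Rabs (xi2 p i b) <= 1) by (intros i b; unfold xi2, xeps; specialize (Hp i); destruct b; apply Rabs_le; nra).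
 pose proof (hoeff_cond n p (xi2 p) (fun _ => true) (fun i _ => t * Pm d e i i) (fun _ => 1) Hp Hm Hb ltac:(intros; lra) ltac:(intros; split; auto)) as H.
 rewrite (ce_ext _ _ (fun d => 1 * _) (fun dl => exp (t * Diag n p d e dl))) in H.
 2:{ intros dl. rewrite Rmult_1_l. f_equal. unfold Diag. rewrite <- rsum_scal. apply rsum_ext; intros; ring. }
 rewrite (ce_ext _ _ (fun d => 1 * _) (fun dl => exp (2 * rsum n (fun i => (t * Pm d e i i) ^ 2)))) in H by (intros; rewrite Rmult_1_l; auto).
 rewrite ce_const in H. eapply Rle_trans; [apply H|]. apply exp_le.
 rewrite (rsum_ext _ _ (fun i => t^2 * (Pm d e i i * Pm d e i i))) by (intros; ring). rewrite rsum_scal.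
 assert (rsum n (fun i => Pm d e i i * Pm d e i i) <= rsum n (fun i => Pm d e i i)).
 { apply rsum_le; intros i Hi. pose proof (Pii_bounds n d e i Ho Hi). nra. }
 rewrite trace_P in H0 by auto. assert (0 <= t^2) by nra. nra. Qed.

Lemma ind1 n q j : (j < n)%nat -> cond_exp n q (fun s => if nth j s false then 1 else 0) = q j.
Proof. revert q j; induction n; intros q j Hj; [lia|]. rewrite ce_S. destruct j.
 - simpl. rewrite !ce_const; ring.
 - simpl. rewrite !IHn by lia. ring. Qed.

Lemma ind1n n q j : (j < n)%nat -> cond_exp n q (fun s => if negb (nth j s false) then 1 else 0) = 1 - q j.
Proof. intros Hj. rewrite (ce_ext _ _ _ (fun s => 1 - (if nth j s false then 1 else 0))).
 rewrite ce_minus, ce_const, ind1; auto. intros s; destruct (nth j s false); simpl; ring. Qed.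

Lemma ind2 n q i j : (i < n)%nat -> (j < n)%nat ->
  cond_exp n q (fun s => if andb (nth i s false) (negb (nth j s false)) then 1 else 0) =
  if Nat.eqb i j then 0 else q i * (1 - q j).
Proof. revert q i j; induction n; intros q i j Hi Hj; [lia|]. rewrite ce_S. destruct i, j; simpl.
 - rewrite !ce_const; ring.
 - rewrite ind1n by lia. rewrite ce_const. ring.
 - rewrite (ce_ext _ _ (fun s => if andb (nth i s false) false then 1 else 0) (fun _ => 0)) by (intros; rewrite Bool.andb_false_r; auto).
   rewrite (ce_ext _ _ (fun s => if andb (nth i s false) true then 1 else 0) (fun s => if nth i s false then 1 else 0)) by (intros; rewrite Bool.andb_true_r; auto).
   rewrite ind1 by lia. rewrite ce_const. ring.
 - rewrite !IHn by lia. destruct (Nat.eqb i j); ring. Qed.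

Lemma avg_exp d t : (1 <= d)%nat -> exp (rsum d t / INR d) <= rsum d (fun k => exp (t k)) / INR d.
Proof. intros Hd. assert (HdR : 0 < INR d) by (apply lt_0_INR; lia).
 set (m := rsum d t / INR d).
 assert (rsum d (fun k => exp m * (1 + (t k - m))) <= rsum d (fun k => exp (t k))).
 { apply rsum_le; intros k _. replace (t k) with (m + (t k - m)) at 2 by ring. rewrite exp_plus.
   apply Rmult_le_compat_l; [left; apply exp_pos| apply exp_ineq1_le]. }
 rewrite rsum_scal, rsum_plus, rsum_minus, !rsum_const in H.
 assert (INR d * m = rsum d t) by (unfold m; field; lra).
 apply (Rmult_le_reg_r (INR d)); auto. unfold Rdiv. rewrite Rmult_assoc, Rinv_l by lra. nra. Qed.

Lemma C0_ge1 : 1 <= C0.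
Proof. unfold C0. assert (exp (-/16) < 1) by (rewrite <- exp_0; apply exp_increasing; lra).
 pose proof (exp_pos (-/16)). assert (1 <= exp (/16)) by (pose proof (exp_ineq1_le (/16)); lra).
 apply (Rmult_le_reg_r (1 - exp (- / 16))); [lra|]. unfold Rdiv. rewrite Rmult_assoc, Rinv_l by lra. nra. Qed.

Lemma quad_mgf n p d e s mu : pok p -> ortho n d e -> 0 <= mu -> mu * INR d <= /16 ->
  cond_exp n p (fun dl => exp (mu * rsum d (fun k => (rsum n (fun j => (if nth j s false then 0 else e k j) * eps p j dl)) ^ 2))) <= C0.
Proof. intros Hp Ho Hmu Hd.
 destruct d as [|d'].
 - simpl. rewrite Rmult_0_r, exp_0, ce_const. apply C0_ge1.
 - set (d := S d'). assert (HdR : 0 < INR d) by (apply lt_0_INR; unfold d; lia).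
   apply Rle_trans with (cond_exp n p (fun dl => rsum d (fun k => exp (mu * INR d * (rsum n (fun j => (if nth j s false then 0 else e k j) * eps p j dl)) ^ 2)) / INR d)).
   + apply ce_le; auto. intros dl. eapply Rle_trans; [|apply avg_exp; unfold d; lia]. apply exp_le.
     rewrite <- rsum_scal. unfold Rdiv. rewrite <- rsum_scal_r. right; apply rsum_ext; intros. field; lra.
   + unfold Rdiv. rewrite (ce_ext _ _ _ (fun dl => / INR d * rsum d (fun k => exp (mu * INR d * (rsum n (fun j => (if nth j s false then 0 else e k j) * eps p j dl)) ^ 2)))) by (intros; ring).
     rewrite ce_scal, ce_rsum. apply Rle_trans with (/ INR d * rsum d (fun _ => C0)).
     * apply Rmult_le_compat_l; [left; apply Rinv_0_lt_compat; auto|]. apply rsum_le; intros k Hk.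
       apply subg_sq; auto. 2:{ split; [apply Rmult_le_pos; lra| auto]. }
       apply Rle_trans with (rsum n (fun j => e k j ^ 2)).
       apply rsum_le; intros j _. destruct (nth j s false); nra.
       pose proof (Ho k k Hk Hk). rewrite Nat.eqb_refl in H. unfold ip in H. right. rewrite <- H. apply rsum_ext; intros; ring.
     * rewrite rsum_const. right. field. lra.
Qed.

Definition Ind s i j := if andb (nth i s false) (negb (nth j s false)) then 1 else 0.
Definition ws n d e p s i dl := rsum n (fun j => (if nth j s false then 0 else Pm d e i j) * eps p j dl).

Lemma Z_avg n p d e dl t : t * Zq n p d e dl =
  cond_exp n (fun _ => /2) (fun s => 4 * t * rsum n (fun i => rsum n (fun j => Ind s i j * (Pm d e i j * eps p i dl * eps p j dl)))).
Proof. rewrite ce_scal, ce_rsum. unfold Zq. rewrite <- rsum_scal, <- rsum_scal. apply rsum_ext; intros i Hi.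
 rewrite ce_rsum, <- rsum_scal, <- rsum_scal. apply rsum_ext; intros j Hj.
 rewrite (ce_ext _ _ _ (fun s => (Pm d e i j * eps p i dl * eps p j dl) * Ind s i j)) by (intros; ring).
 rewrite ce_scal. unfold Ind. rewrite ind2 by auto. destruct (Nat.eqb i j); field. Qed.

Lemma Zs_form n p d e s dl t :
  4 * t * rsum n (fun i => rsum n (fun j => Ind s i j * (Pm d e i j * eps p i dl * eps p j dl))) =
  rsum n (fun i => if nth i s false then (4 * t * ws n d e p s i dl) * xeps p i (nth i dl false) else 0).
Proof. rewrite <- rsum_scal. apply rsum_ext; intros i _. unfold Ind, ws. destruct (nth i s false); simpl.
 - rewrite <- eps_xeps. rewrite <- rsum_scal.
   rewrite Rmult_assoc, (Rmult_comm (rsum _ _)), <- Rmult_assoc, <- rsum_scal. apply rsum_ext; intros j _.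
   destruct (nth j s false); simpl; ring.
 - rewrite (rsum_ext _ _ (fun _ => 0)) by (intros; ring). rewrite rsum_zero; ring. Qed.

Lemma ws_comb n d e p s dl : forall i, ws n d e p s i dl =
  comb d (fun k => rsum n (fun j => (if nth j s false then 0 else e k j) * eps p j dl)) e i.
Proof. intros i. unfold ws, comb, Pm. rewrite (rsum_ext n _ (fun j => rsum d (fun k => e k i * ((if nth j s false then 0 else e k j) * eps p j dl)))).
 rewrite rsum_swap. apply rsum_ext; intros k _. rewrite rsum_scal. ring.
 intros j _. destruct (nth j s false). rewrite (rsum_ext _ _ (fun _ => 0)) by (intros; ring). rewrite rsum_zero; ring.
 rewrite <- rsum_scal_r. apply rsum_ext; intros; ring. Qed.

Lemma Z_mgf n p d e t : pok p -> ortho n d e -> 32 * t ^ 2 * INR d <= /16 ->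
  cond_exp n p (fun dl => exp (t * Zq n p d e dl)) <= C0.
Proof. intros Hp Ho Ht.
 assert (Hq : pok (fun _ => /2)) by (intros i; lra).
 apply Rle_trans with (cond_exp n p (fun dl => cond_exp n (fun _ => /2) (fun s => exp (rsum n (fun i => if nth i s false then (4 * t * ws n d e p s i dl) * xeps p i (nth i dl false) else 0))))).
 { apply ce_le; auto. intros dl. rewrite Z_avg. eapply Rle_trans; [apply jensen; auto|]. right. apply ce_ext; intros s.
   rewrite Zs_form; auto. }
 rewrite ce_swap. rewrite <- (ce_const n (fun _ => /2) C0). apply ce_le; auto. intros s.
 pose proof (hoeff_cond n p (xeps p) (fun i => nth i s false) (fun i dl => 4 * t * ws n d e p s i dl) (fun _ => 1) Hp (xeps_mean p Hp) (xeps_bound p Hp)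
   ltac:(intros; lra)) as H.
 rewrite (ce_ext _ _ (fun d => 1 * _) (fun dl => exp (rsum n (fun i => if nth i s false then (4 * t * ws n d e p s i dl) * xeps p i (nth i dl false) else 0)))) in H by (intros; ring).
 eapply Rle_trans; [apply H|].
 { intros dl dl' Hdd. split; auto. intros i. f_equal. unfold ws. apply rsum_ext; intros j _.
   specialize (Hdd j). destruct (nth j s false); [ring|]. unfold eps. rewrite Hdd; auto. }
 clear H. eapply Rle_trans; [|apply (quad_mgf n p d e s (32 * t^2)); auto; nra].
 apply ce_le; auto. intros dl. rewrite Rmult_1_l. apply exp_le.
 set (c := fun k => rsum n (fun j => (if nth j s false then 0 else e k j) * eps p j dl)).
 assert (rsum n (fun i => ws n d e p s i dl ^ 2) = rsum d (fun k => c k ^ 2)).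
 { rewrite <- (norm_comb n d c e Ho). unfold ip. apply rsum_ext; intros i _. rewrite ws_comb. fold c. ring. }
 apply Rle_trans with (32 * t^2 * rsum n (fun i => ws n d e p s i dl ^ 2)); [|right; rewrite H; auto]. rewrite <- rsum_scal, <- rsum_scal. apply rsum_le; intros i _.
 destruct (nth i s false); nra. Qed.

Lemma rmax_exp y l : 0 < l -> Rmax y 0 <= exp (l * y) / l.
Proof. intros Hl. pose proof (exp_ineq1_le (l * y)). pose proof (exp_pos (l*y)).
 unfold Rmax; destruct (Rle_dec y 0).
 - apply Rlt_le, Rdiv_lt_0_compat; auto.
 - apply (Rmult_le_reg_r l); auto. unfold Rdiv. rewrite Rmult_assoc, Rinv_l by lra. nra. Qed.

Lemma core et : 0 < et -> exists K c, 0 < K /\ 0 < c /\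
  forall n p d e D, pok p -> ortho n d e -> (d <= D)%nat ->
  cond_exp n p (fun dl => Rmax (Xq n p d e dl - (1 + et) * INR D / 4) 0) <= K * exp (- c * sqrt (INR D)).
Proof. intros Het.
 set (c0 := /64). set (a := c0 * et / 8). set (M := (exp 1 + C0) / 2).
 assert (Hc0 : 0 < c0) by (unfold c0; lra). assert (Ha : 0 < a) by (unfold a; nra).
 assert (HM : 0 < M) by (unfold M; pose proof C0_pos; pose proof (exp_pos 1); lra).
 exists (M / (c0 * a)), a. split; [apply Rdiv_lt_0_compat; nra|]. split; auto.
 intros n p d e D Hp Ho HdD.
 destruct D as [|D'].
 - assert (d = 0%nat) by lia. subst d. unfold Xq. simpl rsum.
   rewrite (ce_ext _ _ _ (fun _ => 0)). rewrite ce_const. apply Rmult_le_pos; [left; apply Rdiv_lt_0_compat; [auto| apply Rmult_lt_0_compat; auto]| left; apply exp_pos].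
   intros; change (INR 0) with 0; unfold Rmax; destruct (Rle_dec _ _); lra.
 - set (D := S D'). assert (HD : 1 <= INR D) by (unfold D; rewrite S_INR; pose proof (pos_INR D'); lra).
   set (sD := sqrt (INR D)). assert (HsD : 0 < sD) by (apply sqrt_lt_R0; lra).
   assert (HsD2 : sD * sD = INR D) by (apply sqrt_sqrt; lra).
   set (l := c0 / sD). assert (Hl : 0 < l) by (apply Rdiv_lt_0_compat; auto).
   assert (Hl2 : l ^ 2 * INR D = c0 ^ 2) by (unfold l; rewrite <- HsD2; field; lra).
   assert (HdR : INR d <= INR D) by (apply le_INR; auto).
   assert (Hd0 : 0 <= INR d) by apply pos_INR.
   assert (Hpt : forall dl, Rmax (Xq n p d e dl - (1 + et) * INR D / 4) 0 <=
     exp (- l * et * INR D / 4) / l * ((exp (2 * l * Diag n p d e dl) + exp (2 * l * Zq n p d e dl)) / 2)).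
   { intros dl. pose proof (X_le n p d e dl Hp Ho).
     apply Rle_trans with (Rmax (Diag n p d e dl + Zq n p d e dl - et * INR D / 4) 0).
     { unfold Rmax. destruct (Rle_dec _ 0), (Rle_dec _ 0); lra. }
     eapply Rle_trans; [apply (rmax_exp _ l Hl)|].
     replace (l * (Diag n p d e dl + Zq n p d e dl - et * INR D / 4)) with (- l * et * INR D / 4 + (l * Diag n p d e dl + l * Zq n p d e dl)).
     2:{ set (A := Diag n p d e dl). set (B := Zq n p d e dl). set (DD := INR D). clearbody A B DD l. field. }
     rewrite !exp_plus.
     replace (2 * l * Diag n p d e dl) with (l * Diag n p d e dl + l * Diag n p d e dl) by ring.
     replace (2 * l * Zq n p d e dl) with (l * Zq n p d e dl + l * Zq n p d e dl) by ring. rewrite !exp_plus.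
     set (X := exp (l * Diag n p d e dl)). set (Y := exp (l * Zq n p d e dl)). set (EA := exp (- l * et * INR D / 4)).
     assert (0 < EA / l) by (apply Rdiv_lt_0_compat; [apply exp_pos| auto]).
     assert (X * Y <= (X * X + Y * Y) / 2) by (assert (0 <= (X - Y)^2) by apply pow2_ge_0; nra).
     replace (EA * (X * Y) / l) with (EA / l * (X * Y)) by (field; lra).
     apply Rmult_le_compat_l; lra. }
   eapply Rle_trans; [apply ce_le; [auto| exact Hpt]|].
   rewrite ce_scal. unfold Rdiv at 2. rewrite (ce_ext _ _ _ (fun dl => / 2 * (exp (2 * l * Diag n p d e dl) + exp (2 * l * Zq n p d e dl)))) by (intros; field).
   rewrite ce_scal, ce_plus.
   assert (E1 : cond_exp n p (fun dl => exp (2 * l * Diag n p d e dl)) <= exp 1).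
   { eapply Rle_trans; [apply diag_mgf; auto|]. apply exp_le. unfold c0 in Hl2. nra. }
   assert (E2 : cond_exp n p (fun dl => exp (2 * l * Zq n p d e dl)) <= C0).
   { apply Z_mgf; auto. unfold c0 in Hl2. nra. }
   assert (Hexp : exp (- l * et * INR D * / 4) = exp (-2 * a * sD)).
   { f_equal. unfold l, a. rewrite <- HsD2. field. lra. }
   rewrite Hexp.
   apply Rle_trans with (exp (-2 * a * sD) / l * M).
   { apply Rmult_le_compat_l. apply Rlt_le, Rdiv_lt_0_compat; [apply exp_pos| auto]. unfold M. lra. }
   assert (Hs : a * sD <= exp (a * sD)) by (pose proof (exp_ineq1_le (a * sD)); lra).
   replace (exp (-2 * a * sD) / l * M) with (sD * exp (-2 * a * sD) * (M / c0)) by (unfold l; field; lra).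
   replace (M / (c0 * a) * exp (- a * sD)) with ((exp (a * sD) / a) * exp (-2 * a * sD) * (M / c0)).
   2:{ replace (- a * sD) with (a * sD + -2 * a * sD) by ring. rewrite exp_plus. field. lra. }
   apply Rmult_le_compat_r; [apply Rlt_le, Rdiv_lt_0_compat; auto|]. apply Rmult_le_compat_r; [left; apply exp_pos|].
   apply (Rmult_le_reg_l a); auto. replace (a * (exp (a * sD) / a)) with (exp (a * sD)) by (field; lra). lra.
Qed.

Definition lsum {A : Type} (l : list A) (f : A -> R) : R := fold_right (fun m acc => f m + acc) 0 l.

Lemma lsum_nonneg {A} (l : list A) f : (forall a, 0 <= f a) -> 0 <= lsum l f.
Proof. intros H; induction l; simpl; [lra|]. specialize (H a); lra. Qed.

Lemma lsum_le_term {A} (l : list A) f a : (forall a, 0 <= f a) -> In a l -> f a <= lsum l f.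
Proof. intros H Hin; induction l; simpl in *; [contradiction|]. destruct Hin as [<-|Hin].
 - pose proof (lsum_nonneg l f H); lra.
 - specialize (IHl Hin); specialize (H a0); lra. Qed.

Lemma lsum_le {A} (l : list A) f g : (forall a, f a <= g a) -> lsum l f <= lsum l g.
Proof. intros H; induction l; simpl; [lra|]. specialize (H a); lra. Qed.

Lemma lsum_scal {A} (l : list A) c f : lsum l (fun a => c * f a) = c * lsum l f.
Proof. induction l; simpl; [lra|]. rewrite IHl; lra. Qed.

Lemma lsum_prod {A B} (l1 : list A) (l2 : list B) f g : lsum l1 (fun a => lsum l2 (fun b => f a * g b)) = lsum l1 f * lsum l2 g.
Proof. induction l1; simpl; [lra|]. rewrite IHl1. rewrite lsum_scal. ring. Qed.

Lemma ce_lsum {A} n p (l : list A) (F : A -> list bool -> R) :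
  cond_exp n p (fun dl => lsum l (fun a => F a dl)) = lsum l (fun a => cond_exp n p (F a)).
Proof. induction l; simpl. - apply ce_const. - rewrite ce_plus, IHl; auto. Qed.

Lemma nodup_cover {A : Type} (L : list A) : exists l, NoDup l /\ forall x, In x L -> In x l.
Proof. induction L. - exists nil; split; [constructor| intros; contradiction].
 - destruct IHL as [l [Hl Hc]]. destruct (classic (In a l)).
   + exists l; split; auto. intros x [<-|Hx]; auto.
   + exists (a :: l); split; [constructor; auto|]. intros x [<-|Hx]; [left; auto| right; auto]. Qed.

Lemma ce_le_in n p L1 L2 : pok p -> (forall d, In d (all_bools n) -> L1 d <= L2 d) -> cond_exp n p L1 <= cond_exp n p L2.
Proof. intros Hp H. rewrite !ce_sumL. unfold sumL. induction (all_bools n); simpl; [lra|].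
 assert (bern_prob n p a * L1 a <= bern_prob n p a * L2 a) by (apply Rmult_le_compat_l; [apply bern_nonneg; auto| apply H; left; auto]).
 assert (fold_right (fun d acc => bern_prob n p d * L1 d + acc) 0 l <= fold_right (fun d acc => bern_prob n p d * L2 d + acc) 0 l)
   by (apply IHl; intros; apply H; right; auto). lra. Qed.

Definition Vm (x t : nat -> R) (D1 D2 : nat) (ph ps : nat -> R -> R) (j : nat) : nat -> R :=
  fun i => ph (j / D2)%nat (x i) * ps (j mod D2)%nat (t i).

Lemma divmod_pair k l D2 : (l < D2)%nat -> ((k * D2 + l) / D2 = k /\ (k * D2 + l) mod D2 = l)%nat.
Proof. intros Hl. split.
 - symmetry. apply (Nat.div_unique _ _ _ l); auto. lia.
 - symmetry. apply (Nat.mod_unique _ _ k); auto. lia. Qed.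

Lemma span_covered n (x t : nat -> R) (A1 A2 : R -> Prop) D1 D2 ph ps g d e :
  (forall i, (i < n)%nat -> A1 (x i) /\ A2 (t i)) -> in_tensor_span A1 A2 D1 D2 ph ps g ->
  (forall j, (j < D1 * D2)%nat -> covered n d e (Vm x t D1 D2 ph ps j)) ->
  covered n d e (fun i => g (x i) (t i)).
Proof. intros Hx [a Ha] Hc.
 apply (covered_ext n d e (fun i => rsum D1 (fun k => rsum D2 (fun l => a k l * (ph k (x i) * ps l (t i)))))).
 { intros i Hi. destruct (Hx i Hi). rewrite Ha by auto. apply rsum_ext; intros; apply rsum_ext; intros; ring. }
 apply covered_rsum; intros k Hk. apply covered_rsum; intros l Hl. apply covered_scal.
 apply (covered_ext n d e (Vm x t D1 D2 ph ps (k * D2 + l))).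
 { intros i _. unfold Vm. destruct (divmod_pair k l D2 Hl) as [-> ->]. auto. }
 apply Hc. nia. Qed.

Lemma span_zero n (x t : nat -> R) (A1 A2 : R -> Prop) D1 D2 ph ps g :
  (forall i, (i < n)%nat -> A1 (x i) /\ A2 (t i)) -> in_tensor_span A1 A2 D1 D2 ph ps g ->
  (D1 * D2 = 0)%nat -> forall i, (i < n)%nat -> g (x i) (t i) = 0.
Proof. intros Hx [a Ha] H0 i Hi. destruct (Hx i Hi). rewrite Ha by auto.
 destruct (Nat.mul_eq_0 D1 D2) as [Hm _]. destruct (Hm H0) as [-> | ->].
 - simpl; auto. - rewrite (rsum_ext _ _ (fun _ => 0)). apply rsum_zero. intros; simpl; auto. Qed.

Lemma amgm a b al : 0 < al -> 2 * a * b <= al * a ^ 2 + b ^ 2 / al.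
Proof. intros H. assert (0 <= al * (a - b / al) ^ 2) by (apply Rmult_le_pos; [lra| apply pow2_ge_0]).
 replace (al * (a - b / al) ^ 2) with (al * a^2 - 2 * a * b + b^2 / al) in H0 by (field; lra). lra. Qed.

Lemma det_ineq n (f Fh G dlt : nat -> R) (d : nat) (e : nat -> nat -> R) al be th et Dm Dmh :
  ortho n d e -> covered n d e (fun i => Fh i - G i) -> 0 < al -> 0 < be -> (1 + et) / al = th ->
  rsum n (fun i => (dlt i - Fh i) ^ 2) + th / 4 * Dmh <= rsum n (fun i => (dlt i - G i) ^ 2) + th / 4 * Dm ->
  (1 - al * (1 + be)) * rsum n (fun i => (Fh i - f i) ^ 2) <=
  (1 + al * (1 + / be)) * rsum n (fun i => (f i - G i) ^ 2) + th * Dm / 2 +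
  / al * Rmax (rsum d (fun k => (rsum n (fun i => e k i * (dlt i - f i))) ^ 2) - (1 + et) * (Dm + Dmh) / 4) 0.
Proof.
 intros Ho [c Hc] Hal Hbe Hth Hg.
 set (eps := fun i => dlt i - f i).
 set (P := rsum n (fun i => (Fh i - f i) ^ 2)).
 set (Q := rsum n (fun i => (f i - G i) ^ 2)).
 set (Xs := rsum d (fun k => (rsum n (fun i => e k i * (dlt i - f i))) ^ 2)).
 set (Se := rsum n (fun i => eps i * (Fh i - G i))).
 assert (E1 : forall h, rsum n (fun i => (dlt i - h i) ^ 2) = rsum n (fun i => (f i - h i) ^ 2) + 2 * rsum n (fun i => eps i * (f i - h i)) + rsum n (fun i => eps i ^ 2)).
 { intros h. rewrite <- rsum_scal, <- !rsum_plus. apply rsum_ext; intros; unfold eps; ring. }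
 rewrite !E1 in Hg.
 assert (E2 : rsum n (fun i => eps i * (f i - G i)) = rsum n (fun i => eps i * (f i - Fh i)) + Se).
 { unfold Se. rewrite <- rsum_plus. apply rsum_ext; intros; ring. }
 assert (E3 : rsum n (fun i => (f i - Fh i) ^ 2) = P) by (unfold P; apply rsum_ext; intros; ring).
 rewrite E2, E3 in Hg. fold Q in Hg.
 assert (HP : P <= Q + 2 * Se + th / 4 * (Dm - Dmh)) by lra.
 assert (HSe : Se = rsum d (fun k => c k * rsum n (fun i => e k i * eps i))).
 { transitivity (ip n (comb d c e) eps).
   - unfold Se, ip. apply rsum_ext; intros i Hi. rewrite <- Hc by auto. ring.
   - rewrite ip_comb_l. reflexivity. }
 assert (HU : rsum n (fun i => (Fh i - G i) ^ 2) = rsum d (fun k => c k ^ 2)).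
 { rewrite <- (norm_comb n d c e Ho). unfold ip. apply rsum_ext; intros i Hi. rewrite <- Hc by auto. ring. }
 assert (H2 : 2 * Se <= al * rsum d (fun k => c k ^ 2) + Xs / al).
 { rewrite HSe. unfold Xs, Rdiv. rewrite <- rsum_scal_r, <- rsum_scal, <- rsum_scal, <- rsum_plus. apply rsum_le; intros k _.
   pose proof (amgm (c k) (rsum n (fun i => e k i * eps i)) al Hal). unfold eps in *. unfold Rdiv in H. lra. }
 assert (H3 : rsum n (fun i => (Fh i - G i) ^ 2) <= (1 + be) * P + (1 + / be) * Q).
 { unfold P, Q. rewrite <- !rsum_scal, <- rsum_plus. apply rsum_le; intros i _.
   pose proof (amgm (Fh i - f i) (f i - G i) be Hbe). unfold Rdiv in H. 
   replace ((Fh i - G i) ^ 2) with ((Fh i - f i) ^ 2 + 2 * (Fh i - f i) * (f i - G i) + (f i - G i) ^ 2) by ring.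
   replace ((1 + be) * (Fh i - f i) ^ 2 + (1 + / be) * (f i - G i) ^ 2) with ((Fh i - f i) ^ 2 + (f i - G i) ^ 2 + (be * (Fh i - f i) ^ 2 + (f i - G i) ^ 2 * / be)) by ring.
   lra. }
 rewrite HU in H3.
 assert (H4 : al * rsum d (fun k => c k ^ 2) <= al * ((1 + be) * P + (1 + / be) * Q)) by (apply Rmult_le_compat_l; lra).
 assert (H5 : Xs / al + th / 4 * (Dm - Dmh) <= / al * Rmax (Xs - (1 + et) * (Dm + Dmh) / 4) 0 + th * Dm / 2).
 { assert (Xs - (1 + et) * (Dm + Dmh) / 4 <= Rmax (Xs - (1 + et) * (Dm + Dmh) / 4) 0) by apply Rmax_l.
   assert (/ al * (Xs - (1 + et) * (Dm + Dmh) / 4) <= / al * Rmax (Xs - (1 + et) * (Dm + Dmh) / 4) 0)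
     by (apply Rmult_le_compat_l; [left; apply Rinv_0_lt_compat; auto| auto]).
   assert (/ al * (Xs - (1 + et) * (Dm + Dmh) / 4) = Xs / al - th * (Dm + Dmh) / 4) by (rewrite <- Hth; field; lra).
   lra. }
 assert (Hexp : al * ((1 + be) * P + (1 + / be) * Q) = al * (1 + be) * P + al * (1 + / be) * Q) by ring.
 rewrite Hexp in H4.
 assert (Hexp2 : (1 - al * (1 + be)) * P = P - al * (1 + be) * P) by ring.
 rewrite Hexp2. lra.
Qed.

Lemma clip_le a b : 0 <= b <= 1 -> (clip01 a - b) ^ 2 <= (a - b) ^ 2.
Proof. intros Hb. unfold clip01, Rmin, Rmax.
 destruct (Rle_dec a 0); destruct (Rle_dec 0 1); try lra; destruct (Rle_dec a 1); nra. Qed.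

Definition basP n N (v : nat -> nat -> R) (de : nat * (nat -> nat -> R)) : Prop :=
  (fst de <= N)%nat /\ ortho n (fst de) (snd de) /\ forall j, (j < N)%nat -> covered n (fst de) (snd de) (v j).

Lemma GS2 n N v : exists de, basP n N v de.
Proof. destruct (GS n N v) as [d [e H]]. exists (d, e). exact H. Qed.

Definition bas n N v : nat * (nat -> nat -> R) := proj1_sig (constructive_indefinite_description _ (GS2 n N v)).
Lemma bas_spec n N v : basP n N v (bas n N v).
Proof. unfold bas. apply proj2_sig. Qed.

Lemma sqrt_prod_bound (D1 D2 Dm : nat) : (1 <= D1)%nat -> (1 <= D2)%nat ->
  (sqrt (INR D1) + sqrt (INR D2)) / 2 <= sqrt (INR (Dm + D1 * D2)).
Proof. intros H1 H2. assert (1 <= INR D1) by (apply (le_INR 1); auto). assert (1 <= INR D2) by (apply (le_INR 1); auto).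
 assert (HS : sqrt (INR D1) * sqrt (INR D2) <= sqrt (INR (Dm + D1 * D2))).
 { rewrite <- sqrt_mult by lra. apply sqrt_le_1_alt. rewrite plus_INR, mult_INR. pose proof (pos_INR Dm). lra. }
 assert (1 <= sqrt (INR D1)) by (rewrite <- sqrt_1; apply sqrt_le_1_alt; lra).
 assert (1 <= sqrt (INR D2)) by (rewrite <- sqrt_1; apply sqrt_le_1_alt; lra).
 nra. Qed.

Lemma lsum_ext {A : Type} (l : list A) f g : (forall a, f a = g a) -> lsum l f = lsum l g.
Proof. intros H; induction l; simpl; auto. rewrite H, IHl; auto. Qed.

Theorem theorem1 :
  forall (theta : R), 1 < theta ->
  forall (B1 B2 : R -> R),
  exists C1 C2 : R, 0 < C1 /\ 0 < C2 /\
  forall (n : nat), (1 <= n)%nat ->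
  forall (a1 b1 a2 b2 : R), a1 <= b1 -> 0 < a2 -> a2 <= b2 ->
  let A1 := fun u => a1 <= u <= b1 in
  let A2 := fun v => a2 <= v <= b2 in
  forall (I1 I2 : Type) (D1 : I1 -> nat) (D2 : I2 -> nat)
         (phi : I1 -> nat -> R -> R) (psi : I2 -> nat -> R -> R),
  (forall m1, lin_indep_on A1 (D1 m1) (phi m1)) ->
  (forall m2, lin_indep_on A2 (D2 m2) (psi m2)) ->
  assumption_H I1 D1 B1 -> assumption_H I2 D2 B2 ->
  let S := fun (m1 : I1) (m2 : I2) (g : R -> R -> R) =>
             in_tensor_span A1 A2 (D1 m1) (D2 m2) (phi m1) (psi m2) g in
  let pen := fun (m1 : I1) (m2 : I2) =>
             theta / 4 * INR (D1 m1 * D2 m2) / INR n in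
  forall (x t : nat -> R),
  (forall i, (i < n)%nat -> A1 (x i) /\ A2 (t i)) ->
  forall (F : R -> R -> R), cond_cdf F ->
  forall (Fhat : I1 -> I2 -> list bool -> R -> R -> R),
  (forall m1 m2 d, S m1 m2 (Fhat m1 m2 d) /\
     forall g, S m1 m2 g -> gamma_n n x t d (Fhat m1 m2 d) <= gamma_n n x t d g) ->
  forall (mhat : list bool -> I1 * I2),
  (forall d m1 m2,
     gamma_n n x t d (Fhat (fst (mhat d)) (snd (mhat d)) d)
       + pen (fst (mhat d)) (snd (mhat d))
     <= gamma_n n x t d (Fhat m1 m2 d) + pen m1 m2) ->
  forall (m1 : I1) (m2 : I2) (g : R -> R -> R), S m1 m2 g ->
    cond_exp n (fun i => F (x i) (t i))
      (fun d => emp_norm2 n x t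
         (fun u v => clip01 (Fhat (fst (mhat d)) (snd (mhat d)) d u v) - F u v))
    <= C1 * (emp_norm2 n x t (fun u v => F u v - g u v) + pen m1 m2) + C2 / INR n.
Proof.
 intros th Hth B1 B2.
 set (et := (th - 1) / 2). set (al := (1 + th) / (2 * th)). set (be := (th - 1) / (2 * (1 + th))).
 set (ka := 1 - al * (1 + be)). set (Am := 1 + al * (1 + / be)).
 assert (Het : 0 < et) by (unfold et; lra).
 assert (Hal : 0 < al) by (unfold al; apply Rdiv_lt_0_compat; lra).
 assert (Hbe : 0 < be) by (unfold be; apply Rdiv_lt_0_compat; lra).
 assert (Hka : 0 < ka). { assert (ka = (th - 1) / (4 * th)) by (unfold ka, al, be; field; lra). rewrite H. apply Rdiv_lt_0_compat; lra. }
 assert (HAm : 0 <= Am). { unfold Am. assert (0 < / be) by (apply Rinv_0_lt_compat; auto). nra. }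
 assert (Hth' : (1 + et) / al = th) by (unfold et, al; field; lra).
 destruct (core et Het) as [K [c [HK [Hc Hcore]]]].
 set (Bs := Rabs (B1 (c / 2)) * Rabs (B2 (c / 2))).
 assert (HBs : 0 <= Bs) by (unfold Bs; apply Rmult_le_pos; apply Rabs_pos).
 exists ((Am + 2) / ka), (K * (1 + Bs) / (ka * al)).
 split; [apply Rdiv_lt_0_compat; lra|]. split; [apply Rdiv_lt_0_compat; [nra| apply Rmult_lt_0_compat; auto]|].
 intros n Hn a1 b1 a2 b2 Hab1 Ha2 Hab2 A1 A2 I1 I2 D1 D2 phi psi Hli1 Hli2 HH1 HH2 S pen x t Hx F HF Fhat HFhat mhat Hmhat m1 m2 g Hg.
 set (p := fun i => F (x i) (t i)).
 assert (Hp : pok p) by (intros i; unfold p; destruct (HF (x i)) as [H _]; apply H).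
 assert (HnR : 0 < INR n) by (apply lt_0_INR; lia).
 set (Dm := (D1 m1 * D2 m2)%nat).
 set (Vm0 := Vm x t (D1 m1) (D2 m2) (phi m1) (psi m2)).
 set (fam := fun (a : I1) (b : I2) (j : nat) => if Nat.ltb j Dm then Vm0 j else if Nat.eqb (D1 a * D2 b) 0 then (fun _ : nat => 0) else Vm x t (D1 a) (D2 b) (phi a) (psi b) (j - Dm)%nat).
 set (fam0 := fun j : nat => if Nat.ltb j Dm then Vm0 j else (fun _ : nat => 0)).
 set (Ba := fun a b => bas n (Dm + D1 a * D2 b) (fam a b)).
 set (B0 := bas n (Dm + 0) fam0).
 set (Rv := fun a b dl => Rmax (Xq n p (fst (Ba a b)) (snd (Ba a b)) dl - (1 + et) * INR (Dm + D1 a * D2 b) / 4) 0).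
 set (R0 := fun dl => Rmax (Xq n p (fst B0) (snd B0) dl - (1 + et) * INR (Dm + 0) / 4) 0).
 assert (Rv_zero : forall a b, (D1 a * D2 b = 0)%nat -> forall dl, Rv a b dl = R0 dl).
 { intros a b H0 dl. assert (Hf : fam a b = fam0).
   { unfold fam, fam0. apply functional_extensionality; intros j. rewrite H0. reflexivity. }
   unfold Rv, R0, Ba, B0. rewrite Hf, H0. reflexivity. }
 assert (Hdet : forall dl, emp_norm2 n x t (fun u v => clip01 (Fhat (fst (mhat dl)) (snd (mhat dl)) dl u v) - F u v) <=
    / INR n * / ka * (Am * rsum n (fun i => (p i - g (x i) (t i)) ^ 2) + th * INR Dm / 2 + / al * Rv (fst (mhat dl)) (snd (mhat dl)) dl)).
 { intros dl. set (a := fst (mhat dl)). set (b := snd (mhat dl)).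
   destruct (bas_spec n (Dm + D1 a * D2 b) (fam a b)) as [Hd [Ho Hcov]].
   set (d := fst (bas n (Dm + D1 a * D2 b) (fam a b))) in *. set (e := snd (bas n (Dm + D1 a * D2 b) (fam a b))) in *.
   set (Fh := fun i => Fhat a b dl (x i) (t i)). set (G := fun i => g (x i) (t i)).
   assert (HcovG : covered n d e G).
   { apply (span_covered n x t A1 A2 (D1 m1) (D2 m2) (phi m1) (psi m2) g d e Hx Hg).
     intros j Hj. assert (fam a b j = Vm x t (D1 m1) (D2 m2) (phi m1) (psi m2) j).
     { unfold fam. assert (Nat.ltb j Dm = true) by (apply Nat.ltb_lt; unfold Dm; lia). rewrite H. reflexivity. }
     rewrite <- H. apply Hcov. unfold Dm in *; lia. }
   assert (HcovF : covered n d e Fh).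
   { destruct (HFhat a b dl) as [HS _].
     destruct (Nat.eq_dec (D1 a * D2 b) 0) as [Hz|Hz].
     - apply (covered_ext n d e (fun _ => 0)); [|apply covered_zero].
       intros i Hi. unfold Fh. symmetry. apply (span_zero n x t A1 A2 (D1 a) (D2 b) (phi a) (psi b)); auto.
     - apply (span_covered n x t A1 A2 (D1 a) (D2 b) (phi a) (psi b) _ d e Hx HS).
       intros j Hj. assert (fam a b (Dm + j)%nat = Vm x t (D1 a) (D2 b) (phi a) (psi b) j).
       { unfold fam. assert (Nat.ltb (Dm + j) Dm = false) by (apply Nat.ltb_ge; lia). rewrite H.
         assert (Nat.eqb (D1 a * D2 b) 0 = false) by (apply Nat.eqb_neq; auto). rewrite H0.
         replace (Dm + j - Dm)%nat with j by lia. reflexivity. }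
       rewrite <- H. apply Hcov. lia. }
   assert (HcovU : covered n d e (fun i => Fh i - G i)).
   { apply (covered_ext n d e (fun i => Fh i + (-1) * G i)); [intros; ring|]. apply covered_plus; auto. apply covered_scal; auto. }
   assert (Hgam : rsum n (fun i => (delta dl i - Fh i) ^ 2) + th / 4 * INR (D1 a * D2 b) <=
                  rsum n (fun i => (delta dl i - G i) ^ 2) + th / 4 * INR Dm).
   { pose proof (Hmhat dl m1 m2) as H1. destruct (HFhat m1 m2 dl) as [_ Hmin]. pose proof (Hmin g Hg) as H2.
     fold a b in H1. unfold gamma_n, pen in *. fold Dm in H1.
     assert (H3 : / INR n * rsum n (fun i => (delta dl i - Fh i) ^ 2) + th / 4 * INR (D1 a * D2 b) / INR n <=
                  / INR n * rsum n (fun i => (delta dl i - G i) ^ 2) + th / 4 * INR Dm / INR n) by (unfold Fh, G; lra).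
     apply (Rmult_le_compat_l (INR n)) in H3; [|lra].
     replace (INR n * (/ INR n * rsum n (fun i => (delta dl i - Fh i) ^ 2) + th / 4 * INR (D1 a * D2 b) / INR n)) with
       (rsum n (fun i => (delta dl i - Fh i) ^ 2) + th / 4 * INR (D1 a * D2 b)) in H3 by (field; lra).
     replace (INR n * (/ INR n * rsum n (fun i => (delta dl i - G i) ^ 2) + th / 4 * INR Dm / INR n)) with
       (rsum n (fun i => (delta dl i - G i) ^ 2) + th / 4 * INR Dm) in H3 by (field; lra). auto. }
   pose proof (det_ineq n p Fh G (fun i => delta dl i) d e al be th et (INR Dm) (INR (D1 a * D2 b)) Ho HcovU Hal Hbe Hth' Hgam) as Hmain.
   fold ka Am in Hmain. cbv beta in Hmain.
   assert (HX : rsum d (fun k => (rsum n (fun i => e k i * (delta dl i - p i))) ^ 2) = Xq n p d e dl) by reflexivity.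
   rewrite HX, <- plus_INR in Hmain.
   assert (HRv : Rv a b dl = Rmax (Xq n p d e dl - (1 + et) * INR (Dm + D1 a * D2 b) / 4) 0) by reflexivity.
   rewrite <- HRv in Hmain.
   unfold emp_norm2.
   assert (Hclip : rsum n (fun i => (clip01 (Fhat a b dl (x i) (t i)) - F (x i) (t i)) ^ 2) <= rsum n (fun i => (Fh i - p i) ^ 2)).
   { apply rsum_le; intros i _. apply clip_le. apply Hp. }
   assert (Hq : rsum n (fun i => (p i - G i) ^ 2) = rsum n (fun i => (p i - g (x i) (t i)) ^ 2)) by reflexivity.
   rewrite Hq in Hmain.
   assert (0 < / INR n) by (apply Rinv_0_lt_compat; auto).
   assert (0 < / ka) by (apply Rinv_0_lt_compat; auto).
   rewrite Rmult_assoc. apply Rmult_le_compat_l; [lra|].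
   apply Rle_trans with (rsum n (fun i => (Fh i - p i) ^ 2)); [exact Hclip|].
   apply (Rmult_le_reg_l ka); auto. rewrite <- Rmult_assoc, Rinv_r, Rmult_1_l by lra. lra. }
 destruct (nodup_cover (map (fun dl => fst (mhat dl)) (all_bools n))) as [l1 [Hl1 Hc1]].
 destruct (nodup_cover (map (fun dl => snd (mhat dl)) (all_bools n))) as [l2 [Hl2 Hc2]].
 set (Ind := fun a b => andb (Nat.leb 1 (D1 a)) (Nat.leb 1 (D2 b))).
 set (U := fun dl => R0 dl + lsum l1 (fun a => lsum l2 (fun b => if Ind a b then Rv a b dl else 0))).
 assert (HRvpos : forall a b dl, 0 <= Rv a b dl) by (intros; unfold Rv; apply Rmax_r).
 assert (Hinpos : forall a dl, 0 <= lsum l2 (fun b => if Ind a b then Rv a b dl else 0)).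
 { intros a0 dl. apply lsum_nonneg. intros b0. destruct (Ind a0 b0); [apply HRvpos| lra]. }
 assert (Hunion : forall dl, In dl (all_bools n) -> Rv (fst (mhat dl)) (snd (mhat dl)) dl <= U dl).
 { intros dl Hin. set (a := fst (mhat dl)). set (b := snd (mhat dl)).
   assert (HR0 : 0 <= R0 dl) by (unfold R0; apply Rmax_r).
   assert (Hout : 0 <= lsum l1 (fun a => lsum l2 (fun b => if Ind a b then Rv a b dl else 0))) by (apply lsum_nonneg; intros; apply Hinpos).
   unfold U. destruct (Nat.eq_dec (D1 a * D2 b) 0) as [Hz|Hz].
   - rewrite Rv_zero by auto. lra.
   - assert (HI : Ind a b = true) by (unfold Ind; apply andb_true_intro; split; apply Nat.leb_le; nia).
     assert (Ha : In a l1) by (apply Hc1; apply (in_map (fun dl => fst (mhat dl))); auto).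
     assert (Hb : In b l2) by (apply Hc2; apply (in_map (fun dl => snd (mhat dl))); auto).
     assert (H1 : Rv a b dl <= lsum l2 (fun b0 => if Ind a b0 then Rv a b0 dl else 0)).
     { replace (Rv a b dl) with (if Ind a b then Rv a b dl else 0) by (rewrite HI; auto).
       apply (lsum_le_term l2 (fun b0 => if Ind a b0 then Rv a b0 dl else 0) b); auto.
       intros b0; destruct (Ind a b0); [apply HRvpos| lra]. }
     assert (H2 : lsum l2 (fun b0 => if Ind a b0 then Rv a b0 dl else 0) <= lsum l1 (fun a0 => lsum l2 (fun b0 => if Ind a0 b0 then Rv a0 b0 dl else 0))).
     { apply (lsum_le_term l1 (fun a0 => lsum l2 (fun b0 => if Ind a0 b0 then Rv a0 b0 dl else 0)) a); auto. }
     lra. }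
 assert (Hc2' : 0 < c / 2) by lra.
 set (ea := fun a => exp (- (c / 2) * sqrt (INR (D1 a)))).
 set (eb := fun b => exp (- (c / 2) * sqrt (INR (D2 b)))).
 assert (Hs1 : 0 <= lsum l1 ea <= Rabs (B1 (c / 2))).
 { split. apply lsum_nonneg; intros; left; apply exp_pos. eapply Rle_trans; [apply (HH1 (c/2) Hc2' l1 Hl1)| apply Rle_abs]. }
 assert (Hs2 : 0 <= lsum l2 eb <= Rabs (B2 (c / 2))).
 { split. apply lsum_nonneg; intros; left; apply exp_pos. eapply Rle_trans; [apply (HH2 (c/2) Hc2' l2 Hl2)| apply Rle_abs]. }
 assert (HER : cond_exp n p (fun dl => Rv (fst (mhat dl)) (snd (mhat dl)) dl) <= K * (1 + Bs)).
 { eapply Rle_trans; [apply ce_le_in; [auto| exact Hunion]|].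
   unfold U. rewrite ce_plus, ce_lsum.
   assert (E0 : cond_exp n p R0 <= K).
   { destruct (bas_spec n (Dm + 0) fam0) as [Hd [Ho _]].
     eapply Rle_trans; [apply (Hcore n p _ _ (Dm + 0)%nat Hp Ho Hd)|].
     assert (exp (- c * sqrt (INR (Dm + 0))) <= 1) by (rewrite <- exp_0; apply exp_le; pose proof (sqrt_pos (INR (Dm + 0))); nra).
     nra. }
   assert (E1 : lsum l1 (fun a => cond_exp n p (fun dl => lsum l2 (fun b => if Ind a b then Rv a b dl else 0))) <=
                lsum l1 (fun a => lsum l2 (fun b => K * (ea a * eb b)))).
   { apply lsum_le; intros a. rewrite ce_lsum. apply lsum_le; intros b.
     destruct (Ind a b) eqn:HI.
     - unfold Ind in HI. apply andb_prop in HI. destruct HI as [Ha Hb]. apply Nat.leb_le in Ha, Hb.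
       destruct (bas_spec n (Dm + D1 a * D2 b) (fam a b)) as [Hd [Ho _]].
       eapply Rle_trans; [apply (Hcore n p _ _ (Dm + D1 a * D2 b)%nat Hp Ho Hd)|].
       apply Rmult_le_compat_l; [lra|]. unfold ea, eb. rewrite <- exp_plus. apply exp_le.
       pose proof (sqrt_prod_bound (D1 a) (D2 b) Dm Ha Hb). nra.
     - rewrite ce_const. assert (0 < ea a) by apply exp_pos. assert (0 < eb b) by apply exp_pos. apply Rmult_le_pos; [lra| apply Rmult_le_pos; lra]. }
   assert (E2 : lsum l1 (fun a => lsum l2 (fun b => K * (ea a * eb b))) = K * (lsum l1 ea * lsum l2 eb)).
   { rewrite <- lsum_prod, <- lsum_scal. apply lsum_ext; intros a. rewrite <- lsum_scal. auto. }
   assert (lsum l1 ea * lsum l2 eb <= Bs) by (unfold Bs; apply Rmult_le_compat; lra).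
   nra. }
 eapply Rle_trans; [apply ce_le; [exact Hp| exact Hdet]|].
 set (Q := rsum n (fun i => (p i - g (x i) (t i)) ^ 2)).
 assert (HQ : 0 <= Q) by (apply rsum_nonneg; intros; apply pow2_ge_0).
 rewrite (ce_ext _ _ _ (fun dl => / INR n * / ka * (Am * Q + th * INR Dm / 2) + (/ INR n * / ka * / al) * Rv (fst (mhat dl)) (snd (mhat dl)) dl)) by (intros; ring).
 rewrite ce_plus, ce_const, ce_scal.
 assert (Hemp : emp_norm2 n x t (fun u v => F u v - g u v) = / INR n * Q) by reflexivity.
 rewrite Hemp. unfold pen. fold Dm.
 assert (HDm : 0 <= INR Dm) by apply pos_INR.
 assert (Hi1 : 0 < / INR n) by (apply Rinv_0_lt_compat; auto).
 assert (Hi2 : 0 < / ka) by (apply Rinv_0_lt_compat; auto).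
 assert (Hi3 : 0 < / al) by (apply Rinv_0_lt_compat; auto).
 assert (HT1 : / INR n * / ka * / al * cond_exp n p (fun dl => Rv (fst (mhat dl)) (snd (mhat dl)) dl) <= / INR n * / ka * / al * (K * (1 + Bs))).
 { apply Rmult_le_compat_l; [|auto]. apply Rmult_le_pos; [apply Rmult_le_pos|]; lra. }
 assert (HT2 : K * (1 + Bs) / (ka * al) / INR n = / INR n * / ka * / al * (K * (1 + Bs))) by (field; lra).
 assert (HT3 : / INR n * / ka * (Am * Q + th * INR Dm / 2) <= (Am + 2) / ka * (/ INR n * Q + th / 4 * INR Dm / INR n)).
 { assert (E : (Am + 2) / ka * (/ INR n * Q + th / 4 * INR Dm / INR n) = / INR n * / ka * (Am * Q + th * INR Dm / 2) + / INR n * / ka * (2 * Q + Am * th / 4 * INR Dm)) by (field; lra).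
   rewrite E. assert (0 <= 2 * Q + Am * th / 4 * INR Dm).
   { assert (0 <= Am * th / 4 * INR Dm) by (apply Rmult_le_pos; [apply Rmult_le_pos; [apply Rmult_le_pos|]|]; lra). lra. }
   assert (0 <= / INR n * / ka * (2 * Q + Am * th / 4 * INR Dm)) by (apply Rmult_le_pos; [apply Rmult_le_pos|]; lra). lra. }
 lra.
Qed.
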